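(* Let $A$ and $B$ be $k$-bialgebras and let $H=A\otimes^\phi_\tau B$ be a bitwisted tensor product, with twisting map $\tau\colon B\otimes A\to A\otimes B$ and cotwisting map $\phi\colon A\otimes B\to B\otimes A$. If $\tau\colon B\otimes^!A\to A\otimes^!B$ and $\phi\colon A\otimes^!B\to B\otimes^!A$ are both continuous, where $A$ and $B$ carry their cofinite topologies, then there is an isomorphism of bialgebras \[H^\circ\cong A^\circ\otimes^{\tau^\circ}_{\phi^\circ}B^\circ.\]
   Context: $k$ is a field (discrete topology). For an algebra $R$, the cofinite topology is the linear topology whose open subspaces are those containing a two-sided ideal of finite codimension; $R^\circ$ is the finite dual (functionals whose kernel contains such an ideal); for a bialgebra $R$, $R^\circ$ is a bialgebra with comultiplication dual to the multiplication and multiplication dual to the comultiplication. For linearly topologized spaces $E,F$, $E\otimes^!F$ is $E\otimes F$ with the linear topology whose open subspaces contain $E_0\otimes F+E\otimes F_0$ for some open subspaces $E_0,F_0$; continuous duals satisfy $(A\otimes^!B)^\circ\cong A^\circ\otimes B^\circ$ for cofinite topologies, so $\tau^\circ$ is a linear map $A^\circ\otimes B^\circ\to B^\circ\otimes A^\circ$ and $\phi^\circ$ a linear map $B^\circ\otimes A^\circ\to A^\circ\otimes B^\circ$. A twisting map $\tau\colon B\otimes A\to A\otimes B$ for algebras is a linear map such that $(m_A\otimes m_B)\circ(\mathrm{id}\otimes\tau\otimes\mathrm{id})$ is an associative multiplication on $A\otimes B$ with unit $1\otimes1$ (algebra $A\otimes_\tau B$); a cotwisting map $\phi\colon C\otimes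 D\to D\otimes C$ for coalgebras is a linear map such that $(\mathrm{id}\otimes\phi\otimes\mathrm{id})\circ(\Delta_C\otimes\Delta_D)$ is a coassociative comultiplication on $C\otimes D$ with counit $\varepsilon_C\otimes\varepsilon_D$ (coalgebra $C\otimes^\phi D$). If $A,B$ are both algebras and coalgebras, $\tau$ a twisting map and $\phi$ a cotwisting map such that $A\otimes_\tau B$ and $A\otimes^\phi B$ together make $A\otimes B$ a bialgebra, this bialgebra is the bitwisted tensor product $A\otimes^\phi_\tau B$. Accordingly $A^\circ\otimes^{\tau^\circ}_{\phi^\circ}B^\circ$ denotes $A^\circ\otimes B^\circ$ with algebra structure $A^\circ\otimes_{\phi^\circ}B^\circ$ and coalgebra structure $A^\circ\otimes^{\tau^\circ}B^\circ$. *)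

(* Defs.v *)
From HB Require Import structures.
From mathcomp Require Import all_boot all_order all_algebra.
From mathcomp Require Import boolp classical_sets functions.
From mathcomp Require Import ring.

Set Implicit Arguments.
Unset Strict Implicit.
Unset Printing Implicit Defensive.

Import GRing.Theory.
Local Open Scope ring_scope.

Section Bitwisted.
Variable k : fieldType.

Definition lin (U V : lmodType k) (f : U -> V) : Prop :=
  forall (a : k) x y, f (a *: x + y) = a *: f x + f y.

Definition linf (U : lmodType k) (f : U -> k) : Prop :=
  forall (a : k) x y, f (a *: x + y) = a * f x + f y.

Definition bil (V W : lmodType k) (B : V -> W -> k) : Prop :=
  (forall w, linf (fun v => B v w)) /\ (forall v, linf (B v)).

Definition Bil (V W : lmodType k) := {B : V -> W -> k | bil B}.

Lemma linf0 (U : lmodType k) (f : U -> k) : linf f -> f 0 = 0.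
Proof.
move=> lf; have := lf 1 0 0; rewrite scale1r addr0 mul1r => h.
by apply: (@addrI _ (f 0)); rewrite addr0 -h.
Qed.

Lemma linfZ (U : lmodType k) (f : U -> k) a x : linf f -> f (a *: x) = a * f x.
Proof. by move=> lf; have := lf a x 0; rewrite addr0 linf0 // addr0. Qed.

(* The algebraic tensor product V (x) W of two k-vector spaces.
   An element is represented by the linear functional it induces on the
   space of bilinear forms V x W -> k; the elements are exactly those
   functionals given by finite sums  sum_i v_i (x) w_i.  Over a field
   the canonical map V (x) W -> (Bil V W)^* is injective, so this is
   (isomorphic to) the usual tensor product.                           *)

Definition tsum (V W : lmodType k) (s : seq (V * W)) : Bil V W -> k^o :=
  fun B => \sum_(p <- s) sval B p.1 p.2.

Definition is_tensor (V W : lmodType k) : {pred Bil V W -> k^o} :=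
  fun t => `[< exists s : seq (V * W), t = tsum s >].

Lemma is_tensor_submod_closed (V W : lmodType k) :
  GRing.submod_closed (@is_tensor V W).
Proof.
split.
  apply/asboolP; exists [::]; apply/funext => B.
  by rewrite /tsum big_nil.
move=> a t u /asboolP [s ->] /asboolP [s' ->]; apply/asboolP.
exists ([seq (a *: p.1, p.2) | p <- s] ++ s'); apply/funext => B.
rewrite /tsum big_cat big_map /=; congr (_ + _).
rewrite [LHS]/GRing.scale /= /GRing.scale /= mulr_sumr.
apply: eq_bigr => p _; case: B => B [BV BW] /=.
by rewrite -(linfZ a p.1 (BV p.2)).
Qed.

Record tens (V W : lmodType k) := Tens {
  tval : Bil V W -> k^o;
  tvalP : tval \in @is_tensor V W }.

Section TensInst.
Variables V W : lmodType k.
HB.instance Definition _ := [isSub for @tval V W].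
HB.instance Definition _ := [Choice of tens V W by <:].
HB.instance Definition _ := GRing.isSubmodClosed.Build k (Bil V W -> k^o)
  (@is_tensor V W) (GRing.submod_closed_semi (is_tensor_submod_closed V W)).
HB.instance Definition _ := [SubChoice_isSubLmodule of tens V W by <:].
End TensInst.

Lemma tensP (V W : lmodType k) (t : tens V W) :
  exists s : seq (V * W), tval t = tsum s.
Proof. exact/asboolP/tvalP. Qed.

Definition trep (V W : lmodType k) (t : tens V W) : seq (V * W) :=
  projT1 (cid (tensP t)).

Lemma pure_is_tensor (V W : lmodType k) (v : V) (w : W) :
  tsum [:: (v, w)] \in @is_tensor V W.
Proof. by apply/asboolP; exists [:: (v, w)]. Qed.

Definition tmul (V W : lmodType k) (v : V) (w : W) : tens V W :=
  Tens (pure_is_tensor v w).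

(* The linear map V (x) W -> U induced by a map beta : V -> W -> U
   (used only for bilinear beta, for which it is independent of the
   chosen representation).                                             *)
Definition lift (V W : lmodType k) (U : nmodType) (beta : V -> W -> U)
  (t : tens V W) : U := \sum_(p <- trep t) beta p.1 p.2.

Definition tmap (V W V' W' : lmodType k) (f : V -> V') (g : W -> W')
  : tens V W -> tens V' W' := lift (fun v w => tmul (f v) (g w)).

Definition tassoc (V1 V2 V3 : lmodType k)
  : tens (tens V1 V2) V3 -> tens V1 (tens V2 V3) :=
  lift (fun t w => lift (fun u v => tmul u (tmul v (w : V3))) t).

Record bialg_ops (V : lmodType k) := BialgOps {
  bmul : V -> V -> V;
  bone : V;
  bcomul : V -> tens V V;
  bcounit : V -> k }.

Definition is_algebra (V : lmodType k) (m : V -> V -> V) (u : V) : Prop :=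
  [/\ (forall x, lin (m x)), (forall y, lin (fun x => m x y)),
      (forall x y z, m x (m y z) = m (m x y) z),
      (forall x, m u x = x) & (forall x, m x u = x)].

Definition coassociative (V : lmodType k) (d : V -> tens V V) : Prop :=
  forall c, tassoc (tmap d id (d c)) = tmap id d (d c).

Definition counital (V : lmodType k) (d : V -> tens V V) (e : V -> k) : Prop :=
  (forall c, lift (fun x y => e x *: y) (d c) = c) /\
  (forall c, lift (fun x y => e y *: x) (d c) = c).

Definition is_coalgebra (V : lmodType k) (d : V -> tens V V) (e : V -> k) :=
  [/\ lin d, linf e, coassociative d & counital d e].

Definition tens_alg_mul (V W : lmodType k) (mV : V -> V -> V)
  (mW : W -> W -> W) (s t : tens V W) : tens V W :=
  lift (fun a b => lift (fun a' b' => tmul (mV a a') (mW b b')) t) s.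

Definition is_bialgebra (V : lmodType k) (H : bialg_ops V) : Prop :=
  [/\ is_algebra (bmul H) (bone H),
      is_coalgebra (bcomul H) (bcounit H) &
   [/\ (forall x y, bcomul H (bmul H x y) =
         tens_alg_mul (bmul H) (bmul H) (bcomul H x) (bcomul H y)),
      bcomul H (bone H) = tmul (bone H) (bone H),
      (forall x y, bcounit H (bmul H x y) = bcounit H x * bcounit H y)
    & bcounit H (bone H) = 1]].

Definition bialg_iso (V W : lmodType k) (HV : bialg_ops V) (HW : bialg_ops W)
    (f : V -> W) : Prop :=
  [/\ lin f, bijective f &
   [/\ (forall x y, f (bmul HV x y) = bmul HW (f x) (f y)),
      f (bone HV) = bone HW,
      (forall x, tmap f f (bcomul HV x) = bcomul HW (f x))
    & (forall x, bcounit HW (f x) = bcounit HV x)]].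

(* (m_A (x) m_B) o (id (x) tau (x) id) on (A (x) B) (x) (A (x) B) *)
Definition twisted_mul (A B : lmodType k) (mA : A -> A -> A) (mB : B -> B -> B)
  (tau : tens B A -> tens A B) (s t : tens A B) : tens A B :=
  lift (fun a b => lift (fun a' b' =>
      tmap (mA a) (fun y => mB y b') (tau (tmul b a'))) t) s.

Definition is_twisting (A B : lmodType k) (mA : A -> A -> A) (uA : A)
  (mB : B -> B -> B) (uB : B) (tau : tens B A -> tens A B) : Prop :=
  [/\ lin tau,
      (forall x y z, twisted_mul mA mB tau x (twisted_mul mA mB tau y z) =
                     twisted_mul mA mB tau (twisted_mul mA mB tau x y) z),
      (forall x, twisted_mul mA mB tau (tmul uA uB) x = x)
    & (forall x, twisted_mul mA mB tau x (tmul uA uB) = x)].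

(* (id (x) phi (x) id) o (Delta_A (x) Delta_B) *)
Definition cotwisted_comul (A B : lmodType k) (dA : A -> tens A A)
  (dB : B -> tens B B) (phi : tens A B -> tens B A) (t : tens A B)
  : tens (tens A B) (tens A B) :=
  lift (fun a b => lift (fun a1 a2 => lift (fun b1 b2 =>
      lift (fun (y : B) (x : A) => tmul (tmul a1 y) (tmul x b2))
           (phi (tmul a2 b1))) (dB b)) (dA a)) t.

Definition tcounit (A B : lmodType k) (eA : A -> k) (eB : B -> k)
  : tens A B -> k := lift (fun a b => eA a * eB b).

Definition is_cotwisting (A B : lmodType k) (dA : A -> tens A A) (eA : A -> k)
  (dB : B -> tens B B) (eB : B -> k) (phi : tens A B -> tens B A) : Prop :=
  [/\ lin phi, coassociative (cotwisted_comul dA dB phi)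
    & counital (cotwisted_comul dA dB phi) (tcounit eA eB)].

Definition bitwisted (A B : lmodType k) (HA : bialg_ops A) (HB : bialg_ops B)
  (tau : tens B A -> tens A B) (phi : tens A B -> tens B A)
  : bialg_ops (tens A B) :=
  BialgOps (twisted_mul (bmul HA) (bmul HB) tau) (tmul (bone HA) (bone HB))
           (cotwisted_comul (bcomul HA) (bcomul HB) phi)
           (tcounit (bcounit HA) (bcounit HB)).

Definition subspace (V : lmodType k) (P : V -> Prop) : Prop :=
  P 0 /\ forall (a : k) x y, P x -> P y -> P (a *: x + y).

Definition two_sided_ideal (V : lmodType k) (m : V -> V -> V) (I : V -> Prop) :=
  subspace I /\ forall x y, I y -> I (m x y) /\ I (m y x).

(* finite codimension: V / I embeds linearly into k^n for some n *)
Definition fin_codim (V : lmodType k) (I : V -> Prop) : Prop :=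
  exists n (pi : V -> 'rV[k]_n), lin pi /\ forall x, I x <-> pi x = 0.

Definition cof_ideal (V : lmodType k) (m : V -> V -> V) (I : V -> Prop) :=
  two_sided_ideal m I /\ fin_codim I.

Definition cof_open (V : lmodType k) (m : V -> V -> V) (U : V -> Prop) :=
  subspace U /\ exists I, cof_ideal m I /\ forall x, I x -> U x.

(* the subspace E0 (x) F + E (x) F0 of E (x) F *)
Definition tsubsp (V W : lmodType k) (E0 : V -> Prop) (F0 : W -> Prop)
  (t : tens V W) : Prop :=
  exists s : seq (V * W), t = \sum_(p <- s) tmul p.1 p.2 /\
                          {in s, forall p, E0 p.1 \/ F0 p.2}.

(* open subspaces of E (x)^! F *)
Definition tens_open (V W : lmodType k) (openV : (V -> Prop) -> Prop)
  (openW : (W -> Prop) -> Prop) (U : tens V W -> Prop) : Prop :=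
  subspace U /\ exists E0 F0, [/\ openV E0, openW F0 &
                                  (forall t, tsubsp E0 F0 t -> U t)].

Definition lcontinuous (X Y : Type) (openX : (X -> Prop) -> Prop)
  (openY : (Y -> Prop) -> Prop) (f : X -> Y) : Prop :=
  forall U, openY U -> openX (fun x => U (f x)).

Definition is_findual (V : lmodType k) (m : V -> V -> V) : {pred V -> k^o} :=
  fun f => `[< linf f /\ exists I, cof_ideal m I /\ forall x, I x -> f x = 0 >].

Lemma is_findual_submod_closed (V : lmodType k) (m : V -> V -> V) :
  GRing.submod_closed (is_findual m).
Proof.
split.
  apply/asboolP; split; first by move=> a x y; rewrite mulr0 addr0.
  exists (fun _ => True); split=> //; split.
    split; first by split.
    by [].
  exists 0%N, (fun _ => 0); split; last by [].
  by move=> a x y; rewrite scaler0 addr0.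
move=> a f g /asboolP [lf [I [[[sI iI] [n [pi [lpi hpi]]]] fI]]].
move=> /asboolP [lg [J [[[sJ iJ] [n' [pi' [lpi' hpi']]]] gJ]]].
apply/asboolP; split.
  have E z : (a *: f + g) z = a * f z + g z by [].
  move=> b x y; rewrite !E lf lg; ring.
exists (fun x => I x /\ J x); split; last first.
  move=> x [Ix Jx]; have E : (a *: f + g) x = a * f x + g x by [].
  by rewrite E fI // gJ // mulr0 addr0.
split.
  split.
    split.
      by case: sI; case: sJ.
    move=> b x y [Ix Jx] [Iy Jy]; split.
      by case: sI => _; apply.
    by case: sJ => _; apply.
  move=> x y [Iy Jy]; have [h1 h2] := iI x y Iy; have [h3 h4] := iJ x y Jy.
  by split; split.
exists (n + n')%N, (fun x => row_mx (pi x) (pi' x)); split.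
    by move=> b x y; rewrite lpi lpi' scale_row_mx add_row_mx.
  move=> x; rewrite hpi hpi'; split; first by move=> [-> ->]; rewrite row_mx0.
by move/eqP; rewrite row_mx_eq0 => /andP [/eqP -> /eqP ->].
Qed.

Record findual (V : lmodType k) (m : V -> V -> V) := FinDual {
  fdval : V -> k^o;
  fdvalP : fdval \in is_findual m }.

Section FinDualInst.
Variables (V : lmodType k) (m : V -> V -> V).
HB.instance Definition _ := [isSub for @fdval V m].
HB.instance Definition _ := [Choice of findual m by <:].
HB.instance Definition _ := GRing.isSubmodClosed.Build k (V -> k^o)
  (is_findual m) (GRing.submod_closed_semi (is_findual_submod_closed m)).
HB.instance Definition _ := [SubChoice_isSubLmodule of findual m by <:].
End FinDualInst.

(* pairing of T in V1^* (x) V2^* (represented in V1^o (x) V2^o) with x (x) y *)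
Definition dpair (V1 V2 : lmodType k) (m1 : V1 -> V1 -> V1) (m2 : V2 -> V2 -> V2)
  (T : tens (findual m1) (findual m2)) (x : V1) (y : V2) : k :=
  lift (fun (f : findual m1) (g : findual m2) => fdval f x * fdval g y) T.

Definition dpairT (V1 V2 : lmodType k) (m1 : V1 -> V1 -> V1) (m2 : V2 -> V2 -> V2)
  (T : tens (findual m1) (findual m2)) (u : tens V1 V2) : k :=
  lift (dpair T) u.

(* The bialgebra structure on R^o:  multiplication dual to Delta,
   comultiplication dual to the multiplication, unit eps, counit f |-> f(1). *)
Definition fd_ops (V : lmodType k) (H : bialg_ops V) : bialg_ops (findual (bmul H)) :=
  BialgOps
    (fun f g : findual (bmul H) =>
       insubd 0 (fun x : V => lift (fun x1 x2 => fdval f x1 * fdval g x2)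
                                   (bcomul H x) : k^o))
    (insubd 0 (bcounit H : V -> k^o))
    (fun f : findual (bmul H) =>
       xget 0 (fun T : tens (findual (bmul H)) (findual (bmul H)) =>
                 forall x y, dpair T x y = fdval f (bmul H x y)))
    (fun f : findual (bmul H) => fdval f (bone H)).

Definition dual_twist (A B : lmodType k) (mA : A -> A -> A) (mB : B -> B -> B)
  (tau : tens B A -> tens A B) (T : tens (findual mA) (findual mB))
  : tens (findual mB) (findual mA) :=
  xget 0 (fun S => forall (b : B) (a : A), dpair S b a = dpairT T (tau (tmul b a))).

Definition dual_bitwisted (A B : lmodType k) (HA : bialg_ops A) (HB : bialg_ops B)
  (tau : tens B A -> tens A B) (phi : tens A B -> tens B A)
  : bialg_ops (tens (findual (bmul HA)) (findual (bmul HB))) :=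
  bitwisted (fd_ops HA) (fd_ops HB)
    (dual_twist phi)   (* phi^o : B^o (x) A^o -> A^o (x) B^o *)
    (dual_twist tau).  (* tau^o : A^o (x) B^o -> B^o (x) A^o *)

End Bitwisted.

(* Main.v *)
Require Import Defs.
From HB Require Import structures.
From mathcomp Require Import all_boot all_order all_algebra.
From mathcomp Require Import boolp classical_sets functions.
From mathcomp Require Import ring.
Require Import Defs.
Set Implicit Arguments.
Unset Strict Implicit.
Unset Printing Implicit Defensive.
Import GRing.Theory.
Local Open Scope ring_scope.

Section S.
Variable k : fieldType.
Implicit Types V W : lmodType k.

Lemma tensE V W (t u : tens V W) : (forall B, tval t B = tval u B) -> t = u.
Proof. by move=> h; apply: val_inj; apply/funext. Qed.

Lemma tvalD V W (t u : tens V W) B : tval (t + u) B = tval t B + tval u B.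
Proof. by []. Qed.
Lemma tvalZ V W (a : k) (t : tens V W) B : tval (a *: t) B = a * tval t B.
Proof. by []. Qed.
Lemma tval0 V W B : tval (0 : tens V W) B = 0.
Proof. by []. Qed.
Lemma tvalN V W (t : tens V W) B : tval (- t) B = - tval t B.
Proof. by []. Qed.
Lemma tval_tmul V W (v : V) (w : W) B : tval (tmul v w) B = sval B v w.
Proof. by rewrite /= /tsum big_seq1. Qed.

Section LinLemmas.
Variables (U V : lmodType k) (f : U -> V) (hf : lin f).
Lemma lin0 : f 0 = 0.
Proof. have := hf 1 0 0; rewrite !scale1r addr0 => h.
by apply: (@addrI _ (f 0)); rewrite addr0 -h. Qed.
Lemma linD x y : f (x + y) = f x + f y.
Proof. by have := hf 1 x y; rewrite !scale1r. Qed.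
Lemma linZ a x : f (a *: x) = a *: f x.
Proof. by have := hf a x 0; rewrite !addr0 lin0 addr0. Qed.
Lemma linN x : f (- x) = - f x.
Proof. by rewrite -scaleN1r linZ scaleN1r. Qed.
Lemma linB x y : f (x - y) = f x - f y.
Proof. by rewrite linD linN. Qed.
Lemma lin_sum (I : Type) (r : seq I) (P : pred I) (F : I -> U) :
  f (\sum_(i <- r | P i) F i) = \sum_(i <- r | P i) f (F i).
Proof.
elim: r => [|i r IH]; first by rewrite !big_nil lin0.
by rewrite !big_cons; case: (P i); rewrite ?linD IH.
Qed.
End LinLemmas.

Lemma lin_id (U : lmodType k) : lin (@id U). Proof. by []. Qed.
Lemma lin_comp (U V W : lmodType k) (f : V -> W) (g : U -> V) :
  lin f -> lin g -> lin (f \o g).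
Proof. by move=> hf hg a x y /=; rewrite hg hf. Qed.

Definition bilin V W (U : lmodType k) (b : V -> W -> U) :=
  (forall w, lin (fun v => b v w)) /\ (forall v, lin (b v)).

Definition sep (U : lmodType k) :=
  forall u : U, (forall l : U -> k^o, lin l -> l u = 0) -> u = 0.

Definition tsumT V W (s : seq (V * W)) : tens V W := \sum_(p <- s) tmul p.1 p.2.

Lemma tval_sum V W (I : Type) (r : seq I) (F : I -> tens V W) B :
  tval (\sum_(i <- r) F i) B = \sum_(i <- r) tval (F i) B.
Proof. by elim: r => [|i r IH]; rewrite ?big_nil ?big_cons // tvalD IH. Qed.

Lemma tval_tsumT V W s B : tval (@tsumT V W s) B = \sum_(p <- s) sval B p.1 p.2.
Proof. by rewrite tval_sum; apply: eq_bigr => p _; rewrite tval_tmul. Qed.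

Lemma trepE V W (t : tens V W) : t = tsumT (trep t).
Proof.
apply: tensE => B; rewrite tval_tsumT /trep; case: cid => s /= ->.
by [].
Qed.

Lemma lin_tval V W B : lin (fun t : tens V W => tval t B : k^o).
Proof. by []. Qed.

Lemma sep_k : sep k^o.
Proof. by move=> u h; apply: (h id). Qed.

Lemma sep_tens V W : sep (tens V W).
Proof. move=> u h; apply: tensE => B; rewrite tval0; exact: h (lin_tval B). Qed.

Section Lift.
Variables (V W U : lmodType k) (b : V -> W -> U).

Lemma lift_lin_fun (U' : lmodType k) (F : U -> U') t : lin F ->
  lift (fun v w => F (b v w)) t = F (lift b t).
Proof. by move=> hF; rewrite /lift (lin_sum hF). Qed.

Lemma lift_ext (b' : V -> W -> U) t : (forall v w, b v w = b' v w) ->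
  lift b t = lift b' t.
Proof. by move=> h; apply: eq_bigr => p _; rewrite h. Qed.

Hypotheses (hb : bilin b) (hU : sep U).

Lemma lift_tsumT s t : t = tsumT s -> lift b t = \sum_(p <- s) b p.1 p.2.
Proof.
move=> ->; rewrite /lift; set s' := trep _.
have e : tsumT s' = tsumT s by rewrite -trepE.
apply/eqP; rewrite -subr_eq0; apply/eqP; apply: hU => l hl.
rewrite (linB hl) !(lin_sum hl) /=.
have bl : bil (fun v w => l (b v w)).
  split=> [w a x y|v a x y]; rewrite ?(proj1 hb) ?(proj2 hb) (hl a); by [].
have := congr1 (fun t => tval t (exist _ _ bl)) e.
by rewrite !tval_tsumT /= => ->; rewrite subrr.
Qed.

Lemma lift_tmul v w : lift b (tmul v w) = b v w.
Proof.
rewrite (@lift_tsumT [:: (v, w)]) ?big_seq1 //.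
by apply: tensE => B; rewrite tval_tsumT big_seq1 tval_tmul.
Qed.

Lemma lift_lin : lin (lift b).
Proof.
move=> a t u.
rewrite (@lift_tsumT ([seq (a *: p.1, p.2) | p <- trep t] ++ trep u)).
  rewrite big_cat big_map /lift scaler_sumr; congr (_ + _).
  by apply: eq_bigr => p _; rewrite (linZ (proj1 hb p.2)).
apply: tensE => B; rewrite tval_tsumT big_cat big_map tvalD tvalZ.
rewrite {1}(trepE t) {1}(trepE u) !tval_tsumT mulr_sumr; congr (_ + _).
apply: eq_bigr => p _; case: B => B [BV BW] /=.
by rewrite -(linfZ a p.1 (BV p.2)).
Qed.

End Lift.

Lemma lift_ext' V W (U : nmodType) (b b' : V -> W -> U) t :
  (forall v w, b v w = b' v w) -> lift b t = lift b' t.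
Proof. by move=> h; apply: eq_bigr => p _; rewrite h. Qed.

Lemma lift_lin_b V W (U : lmodType k) (b1 b2 : V -> W -> U) (a : k) t :
  lift (fun v w => a *: b1 v w + b2 v w) t = a *: lift b1 t + lift b2 t.
Proof. by rewrite /lift big_split /= scaler_sumr. Qed.

Lemma lift_comp V W V' W' (U : lmodType k) (b : V' -> W' -> U)
  (g : V -> W -> tens V' W') t : bilin b -> sep U ->
  lift b (lift g t) = lift (fun v w => lift b (g v w)) t.
Proof. by move=> hb hU; rewrite (lift_lin_fun _ _ (lift_lin hb hU)). Qed.

Lemma bilin_comp V W (U U' : lmodType k) (F : U -> U') (g : V -> W -> U) :
  lin F -> bilin g -> bilin (fun v w => F (g v w)).
Proof.
move=> hF [h1 h2]; split=> [w|v]; first exact: (lin_comp hF (h1 w)).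
exact: (lin_comp hF (h2 v)).
Qed.

Lemma span_exists (V : lmodType k) n (pi : V -> 'rV[k]_n) : lin pi ->
  exists (r : nat) (xs : 'I_r -> V) (al : 'I_r -> V -> k^o),
   [/\ (forall j, lin (al j)), (forall j x, pi x = 0 -> al j x = 0) &
   (forall x, pi x = \sum_j al j x *: pi (xs j))].
Proof.
move=> hpi.
pose M (s : seq V) : 'M[k]_(size s, n) := \matrix_(i < size s, j < n) pi (nth 0 s i) 0 j.
have rowM s (i : 'I_(size s)) : row i (M s) = pi (nth 0 s i).
  by apply/rowP => j; rewrite !mxE.
pose P (m : nat) : bool := `[< exists s, \rank (M s) = m >].
have P0 : exists m, P m by exists (\rank (M [::])); apply/asboolP; exists [::].
have Pb : forall m, P m -> (m <= n)%N.
  by move=> m /asboolP [s <-]; apply: rank_leq_col.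
case: (ex_maxnP P0 Pb) => m0 /asboolP [s Hs] Hmax.
have sub x : (pi x <= M s)%MS.
  pose s' := x :: s.
  have Ms : (M s <= M s')%MS.
    apply/row_subP => i.
    have -> : row i (M s) = row (fintype.lift ord0 i : 'I_(size s')) (M s') by rewrite !rowM.
    exact: row_sub.
  have := mxrank_leqif_sup Ms; case=> _ /esym.
  rewrite Hs; have -> : \rank (M s') = m0.
    apply/eqP; rewrite eqn_leq; apply/andP; split.
      by apply: Hmax; apply/asboolP; exists s'.
    by rewrite -Hs; apply: mxrankS.
  rewrite eqxx => Ms'.
  have := row_sub (ord0 : 'I_(size s')) (M s'); rewrite rowM /= => px.
  exact: submx_trans px Ms'.
pose al (j : 'I_(size s)) (x : V) : k^o := (pi x *m pinvmx (M s)) 0 j.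
exists (size s), (fun j => nth 0 s j), al; split.
- move=> j a x y; rewrite /al hpi mulmxDl -scalemxAl !mxE; by [].
- by move=> j x h; rewrite /al h mul0mx mxE.
- move=> x; rewrite -{1}(mulmxKpV (sub x)) mulmx_sum_row.
  by apply: eq_bigr => j _; rewrite rowM.
Qed.

Lemma bilin_tmul V W : bilin (@tmul k V W).
Proof.
split=> [w a x y|v a x y]; apply: tensE => B; rewrite tvalD tvalZ !tval_tmul;
  case: B => B [h1 h2] /=; [exact: h1 | exact: h2].
Qed.

Lemma tmulZl V W a (v : V) (w : W) : tmul (a *: v) w = a *: tmul v w.
Proof. exact: (linZ ((proj1 (bilin_tmul V W)) w)). Qed.
Lemma tmulZr V W a (v : V) (w : W) : tmul v (a *: w) = a *: tmul v w.
Proof. exact: (linZ ((proj2 (bilin_tmul V W)) v)). Qed.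
Lemma tmul_suml V W (I : Type) (r : seq I) (F : I -> V) (w : W) :
  tmul (\sum_(i <- r) F i) w = \sum_(i <- r) tmul (F i) w.
Proof. exact: (lin_sum ((proj1 (bilin_tmul V W)) w)). Qed.
Lemma tmul_sumr V W (I : Type) (r : seq I) (v : V) (F : I -> W) :
  tmul v (\sum_(i <- r) F i) = \sum_(i <- r) tmul v (F i).
Proof. exact: (lin_sum ((proj2 (bilin_tmul V W)) v)). Qed.

Section FD.
Variables (V : lmodType k) (m : V -> V -> V).

Lemma fdE (f g : findual m) : (forall x, fdval f x = fdval g x) -> f = g.
Proof. by move=> h; apply: val_inj; apply/funext. Qed.
Lemma fdvalD (f g : findual m) x : fdval (f + g) x = fdval f x + fdval g x.
Proof. by []. Qed.
Lemma fdvalZ a (f : findual m) x : fdval (a *: f) x = a * fdval f x.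
Proof. by []. Qed.
Lemma fdval0 x : fdval (0 : findual m) x = 0.
Proof. by []. Qed.
Lemma fdval_sum (I : Type) (r : seq I) (F : I -> findual m) x :
  fdval (\sum_(i <- r) F i) x = \sum_(i <- r) fdval (F i) x.
Proof. by elim: r => [|i r IH]; rewrite ?big_nil ?big_cons // fdvalD IH. Qed.
Lemma lin_fdval x : lin (fun f : findual m => fdval f x : k^o).
Proof. by []. Qed.

Lemma fd_lin (f : findual m) : lin (fdval f).
Proof. by case: f => f /= /asboolP []. Qed.
Lemma fd_ideal (f : findual m) :
  exists I, cof_ideal m I /\ forall x, I x -> fdval f x = 0.
Proof. by case: f => f /= /asboolP []. Qed.
Lemma is_fdP (f : V -> k^o) : lin f ->
  (exists I, cof_ideal m I /\ forall x, I x -> f x = 0) -> f \in is_findual m.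
Proof. by move=> h1 h2; apply/asboolP. Qed.
End FD.

Section Subsp.
Variables (V : lmodType k) (I : V -> Prop) (hI : subspace I).
Lemma sub0 : I 0. Proof. by case: hI. Qed.
Lemma subD x y : I x -> I y -> I (x + y).
Proof. by move=> hx hy; have := (proj2 hI) 1 x y hx hy; rewrite scale1r. Qed.
Lemma subZ a x : I x -> I (a *: x).
Proof. by move=> hx; have := (proj2 hI) a x 0 hx sub0; rewrite addr0. Qed.
Lemma subN x : I x -> I (- x).
Proof. by move=> hx; rewrite -scaleN1r; apply: subZ. Qed.
Lemma subB x y : I x -> I y -> I (x - y).
Proof. by move=> hx hy; apply: subD => //; apply: subN. Qed.
Lemma sub_sum (J : Type) (r : seq J) (F : J -> V) :
  (forall j, I (F j)) -> I (\sum_(j <- r) F j).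
Proof.
move=> h; elim: r => [|j r IH]; first by rewrite big_nil; apply: sub0.
by rewrite big_cons; apply: subD.
Qed.
End Subsp.

Lemma cof_inter (V : lmodType k) (m : V -> V -> V) I J :
  cof_ideal m I -> cof_ideal m J -> cof_ideal m (fun x => I x /\ J x).
Proof.
move=> [[sI iI] [n [pi [lpi hpi]]]] [[sJ iJ] [n' [pi' [lpi' hpi']]]].
split.
  split.
    split.
      by case: sI; case: sJ.
    move=> b x y [Ix Jx] [Iy Jy]; split.
      by case: sI => _; apply.
    by case: sJ => _; apply.
  move=> x y [Iy Jy]; have [h1 h2] := iI x y Iy; have [h3 h4] := iJ x y Jy.
  by split; split.
exists (n + n')%N, (fun x => row_mx (pi x) (pi' x)); split.
    by move=> b x y; rewrite lpi lpi' scale_row_mx add_row_mx.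
  move=> x; rewrite hpi hpi'; split; first by move=> [-> ->]; rewrite row_mx0.
by move/eqP; rewrite row_mx_eq0 => /andP [/eqP -> /eqP ->].
Qed.

Lemma cof_True (V : lmodType k) (m : V -> V -> V) : cof_ideal m (fun _ => True).
Proof.
split; first by split.
exists 0%N, (fun _ => 0); split; last by [].
by move=> a x y; rewrite scaler0 addr0.
Qed.

Lemma fd_common (V : lmodType k) (m : V -> V -> V) (fs : seq (findual m)) :
  exists I, cof_ideal m I /\ forall f, f \in fs -> forall x, I x -> fdval f x = 0.
Proof.
elim: fs => [|f fs [I [hI h]]].
  by exists (fun _ => True); split => //; apply: cof_True.
have [J [hJ hf]] := fd_ideal f.
exists (fun x => I x /\ J x); split; first exact: cof_inter.
move=> g; rewrite inE => /orP [/eqP -> x [_ Jx]|gfs x [Ix _]]; first exact: hf.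
exact: h.
Qed.

Lemma ideal_span (V : lmodType k) (m : V -> V -> V) I : cof_ideal m I ->
  exists (r : nat) (xs : 'I_r -> V) (al : 'I_r -> findual m),
    (forall j x, I x -> fdval (al j) x = 0) /\
    forall x, I (x - \sum_j fdval (al j) x *: xs j).
Proof.
move=> [[sI iI] [n [pi [lpi hpi]]]].
have [r [xs [al [hl hv hd]]]] := span_exists lpi.
have mem j : al j \in is_findual m.
  apply: is_fdP; first exact: hl.
  exists I; split; first by split; [split | exists n, pi].
  by move=> x /hpi; apply: hv.
exists r, xs, (fun j => FinDual (mem j)); split.
  by move=> j x /hpi /= /hv.
move=> x /=; apply/hpi; rewrite (linB lpi) (lin_sum lpi) hd; apply/eqP; rewrite subr_eq0; apply/eqP.
by apply: eq_bigr => j _; rewrite (linZ lpi).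
Qed.

Lemma vanish_decomp (V : lmodType k) (I : V -> Prop) (f : V -> k^o) r
  (xs : 'I_r -> V) (al : 'I_r -> V -> k) x :
  lin f -> (forall y, I y -> f y = 0) -> I (x - \sum_j al j x *: xs j) ->
  f x = \sum_j al j x * f (xs j).
Proof.
move=> hf hv hI; have := hv _ hI; rewrite (linB hf) (lin_sum hf) => /eqP.
rewrite subr_eq0 => /eqP ->; apply: eq_bigr => j _; exact: (linZ hf).
Qed.

Definition LF (V : lmodType k) (X : Type) (ev : V -> X -> k) :=
  forall fs : seq V, exists (I : finType) (xs : I -> X) (al : I -> V),
    forall f, f \in fs -> f = \sum_i ev f (xs i) *: al i.

Lemma LF_inj (V : lmodType k) X (ev : V -> X -> k) (f g : V) : LF ev ->
  (forall x, ev f x = ev g x) -> f = g.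
Proof.
move=> hL h; have [I [xs [al hd]]] := hL [:: f; g].
rewrite (hd f) ?inE ?eqxx // (hd g) ?inE ?eqxx ?orbT //.
by apply: eq_bigr => i _; rewrite h.
Qed.

Lemma LF_fd (V : lmodType k) (m : V -> V -> V) :
  LF (fun (f : findual m) x => fdval f x).
Proof.
move=> fs; have [I [hI hv]] := fd_common fs.
have [r [xs [al [_ hd]]]] := ideal_span hI.
exists 'I_r, xs, al => f hf; apply: fdE => x.
rewrite fdval_sum.
have := @vanish_decomp _ _ (fdval f) _ xs (fun j y => fdval (al j) y) x (fd_lin f) (hv f hf) (hd x).
move=> ->; by apply: eq_bigr => j _; rewrite fdvalZ mulrC.
Qed.

Definition tev (V W : lmodType k) X Y (e1 : V -> X -> k) (e2 : W -> Y -> k)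
  (T : tens V W) (xy : X * Y) : k :=
  lift (fun f g => e1 f xy.1 * e2 g xy.2 : k^o) T.

Lemma LF_tens (V W : lmodType k) X Y (e1 : V -> X -> k) (e2 : W -> Y -> k) :
  LF e1 -> LF e2 -> LF (tev e1 e2).
Proof.
move=> h1 h2 Ts.
have [I [xs [al hd1]]] := h1 (flatten [seq [seq p.1 | p <- trep T] | T <- Ts]).
have [J [ys [be hd2]]] := h2 (flatten [seq [seq p.2 | p <- trep T] | T <- Ts]).
exists (I * J)%type, (fun ij => (xs ij.1, ys ij.2)),
  (fun ij => tmul (al ij.1) (be ij.2)) => T hT.
rewrite {1}(trepE T) /tsumT /tev /lift.
have -> : \sum_(p <- trep T) tmul p.1 p.2 =
  \sum_(p <- trep T) \sum_(ij : I * J)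
     (e1 p.1 (xs ij.1) * e2 p.2 (ys ij.2)) *: tmul (al ij.1) (be ij.2).
  rewrite big_seq_cond [RHS]big_seq_cond; apply: eq_bigr => p /andP [hp _].
  rewrite {1}(hd1 p.1); last first.
    by apply/flattenP; exists [seq p.1 | p <- trep T]; [apply: map_f | apply: map_f].
  rewrite {1}(hd2 p.2); last first.
    by apply/flattenP; exists [seq p.2 | p <- trep T]; [apply: map_f | apply: map_f].
  rewrite tmul_suml.
  under eq_bigr => i _ do rewrite tmulZl tmul_sumr scaler_sumr.
  rewrite pair_bigA /=; apply: eq_bigr => ij _.
  by rewrite tmulZr scalerA.
rewrite exchange_big /=; apply: eq_bigr => ij _.
by rewrite scaler_suml.
Qed.

Lemma lift_lin_param (V W : lmodType k) (P U : lmodType k) (b : P -> V -> W -> U) t :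
  (forall v w, lin (fun p => b p v w)) -> lin (fun p => lift (b p) t).
Proof.
move=> hb a p q; rewrite /lift scaler_sumr -big_split /=.
by apply: eq_bigr => x _; rewrite hb.
Qed.

Lemma lift_sum_b (V W : lmodType k) (U : nmodType) (J : Type) (r : seq J)
  (F : J -> V -> W -> U) t :
  lift (fun v w => \sum_(j <- r) F j v w) t = \sum_(j <- r) lift (F j) t.
Proof. by rewrite /lift exchange_big. Qed.

Lemma lift_exch (V W V' W' : lmodType k) (U : nmodType)
  (b : V -> W -> V' -> W' -> U) t t' :
  lift (fun v w => lift (fun v' w' => b v w v' w') t') t =
  lift (fun v' w' => lift (fun v w => b v w v' w') t) t'.
Proof. by rewrite /lift exchange_big. Qed.

Lemma lift_mull (V W : lmodType k) (b : V -> W -> k) (c : k) t :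
  lift (fun v w => c * b v w) t = c * lift b t.
Proof. by rewrite /lift mulr_sumr. Qed.
Lemma lift_mulr (V W : lmodType k) (b : V -> W -> k) (c : k) t :
  lift (fun v w => b v w * c) t = lift b t * c.
Proof. by rewrite /lift mulr_suml. Qed.
Lemma lift0b (V W : lmodType k) (U : nmodType) t :
  lift (fun (v : V) (w : W) => (0 : U)) t = 0.
Proof. by rewrite /lift big1. Qed.

Lemma lift_tmulk (V W : lmodType k) (b : V -> W -> k) v w :
  bilin (b : V -> W -> k^o) -> lift b (tmul v w) = b v w.
Proof. by move=> hb; exact: (@lift_tmul V W k^o b hb sep_k v w). Qed.
Lemma lift_link (V W : lmodType k) (b : V -> W -> k) :
  bilin (b : V -> W -> k^o) -> lin (fun t => lift b t : k^o).
Proof. by move=> hb; exact: (@lift_lin V W k^o b hb sep_k). Qed.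
Lemma lift_compk (V W V' W' : lmodType k) (b : V' -> W' -> k)
  (g : V -> W -> tens V' W') t : bilin (b : V' -> W' -> k^o) ->
  lift b (lift g t) = lift (fun v w => lift b (g v w)) t.
Proof. by move=> hb; exact: (@lift_comp V W V' W' k^o b g t hb sep_k). Qed.

Lemma bilin_mul (V W : lmodType k) (F : V -> k^o) (G : W -> k^o) :
  lin F -> lin G -> bilin (fun v w => F v * G w : k^o).
Proof.
move=> hF hG; split=> [w a x y|v a x y] /=.
  by rewrite hF /GRing.scale /= mulrDl mulrA.
by rewrite hG /GRing.scale /= mulrDr mulrCA.
Qed.

Lemma bilin_tmulf (V W V' W' : lmodType k) (f : V -> V') (g : W -> W') :
  lin f -> lin g -> bilin (fun v w => tmul (f v) (g w)).
Proof.
move=> hf hg; have [h1 h2] := bilin_tmul V' W'.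
split=> [w|v]; [exact: (lin_comp (h1 (g w)) hf) | exact: (lin_comp (h2 (f v)) hg)].
Qed.

Lemma tmap_tmul (V W V' W' : lmodType k) (f : V -> V') (g : W -> W') v w :
  lin f -> lin g -> tmap f g (tmul v w) = tmul (f v) (g w).
Proof. move=> hf hg; exact: (lift_tmul (bilin_tmulf hf hg) (@sep_tens _ _)). Qed.
Lemma tmap_lin (V W V' W' : lmodType k) (f : V -> V') (g : W -> W') :
  lin f -> lin g -> lin (tmap f g).
Proof. move=> hf hg; exact: (lift_lin (bilin_tmulf hf hg) (@sep_tens _ _)). Qed.
Lemma tmap_id (V W : lmodType k) (f : V -> V) (g : W -> W) t :
  (forall v, f v = v) -> (forall w, g w = w) -> tmap f g t = t.
Proof.
move=> hf hg; rewrite /tmap /lift [RHS]trepE /tsumT.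
by apply: eq_bigr => p _; rewrite hf hg.
Qed.

Definition bil_ev (V : lmodType k) X (e : V -> X -> k) :=
  forall x, lin (fun f => e f x : k^o).

Lemma tev_tmul (V W : lmodType k) X Y (e1 : V -> X -> k) (e2 : W -> Y -> k) f g xy :
  bil_ev e1 -> bil_ev e2 -> tev e1 e2 (tmul f g) xy = e1 f xy.1 * e2 g xy.2.
Proof. by move=> h1 h2; apply: lift_tmulk; apply: bilin_mul. Qed.
Lemma tev_lin (V W : lmodType k) X Y (e1 : V -> X -> k) (e2 : W -> Y -> k) :
  bil_ev e1 -> bil_ev e2 -> bil_ev (tev e1 e2).
Proof. by move=> h1 h2 xy; apply: lift_link; apply: bilin_mul. Qed.

Definition fev (V : lmodType k) (m : V -> V -> V) (f : findual m) (x : V) : k :=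
  fdval f x.
Lemma fev_lin (V : lmodType k) (m : V -> V -> V) : bil_ev (@fev V m).
Proof. by []. Qed.

Lemma dpairE (V1 V2 : lmodType k) (m1 : V1 -> V1 -> V1) (m2 : V2 -> V2 -> V2) T x y :
  dpair T x y = tev (@fev V1 m1) (@fev V2 m2) T (x, y).
Proof. by []. Qed.

Lemma dpair_tmul (V1 V2 : lmodType k) (m1 : V1 -> V1 -> V1) (m2 : V2 -> V2 -> V2)
  (f : findual m1) (g : findual m2) x y : dpair (tmul f g) x y = fdval f x * fdval g y.
Proof. by rewrite dpairE tev_tmul //; apply: fev_lin. Qed.
Lemma dpair_lin (V1 V2 : lmodType k) (m1 : V1 -> V1 -> V1) (m2 : V2 -> V2 -> V2) x y :
  lin (fun T : tens (findual m1) (findual m2) => dpair T x y : k^o).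
Proof. exact: (tev_lin (@fev_lin _ m1) (@fev_lin _ m2) (x, y)). Qed.

Lemma dpair_inj (V1 V2 : lmodType k) (m1 : V1 -> V1 -> V1) (m2 : V2 -> V2 -> V2)
  (S T : tens (findual m1) (findual m2)) :
  (forall x y, dpair S x y = dpair T x y) -> S = T.
Proof.
move=> h; apply: (LF_inj (ev := tev (@fev V1 m1) (@fev V2 m2))).
  by apply: LF_tens; apply: LF_fd.
by case=> x y; rewrite -!dpairE.
Qed.

Lemma lin_mulc (V : lmodType k) (F : V -> k^o) (c : k) :
  lin F -> lin (fun v => F v * c : k^o).
Proof. by move=> hF a x y; rewrite hF /GRing.scale /= mulrDl mulrA. Qed.
Lemma lin_cmul (V : lmodType k) (F : V -> k^o) (c : k) :
  lin F -> lin (fun v => c * F v : k^o).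
Proof. by move=> hF a x y; rewrite hF /GRing.scale /= mulrDr mulrCA. Qed.

Lemma dpairT_tmul (V1 V2 : lmodType k) (m1 : V1 -> V1 -> V1) (m2 : V2 -> V2 -> V2)
  (T : tens (findual m1) (findual m2)) x y : dpairT T (tmul x y) = dpair T x y.
Proof.
apply: lift_tmulk; split=> [w|v]; apply: lift_lin_param => f g.
  exact: lin_mulc (fd_lin f).
exact: lin_cmul (fd_lin g).
Qed.

Lemma dpairT_lin (V1 V2 : lmodType k) (m1 : V1 -> V1 -> V1) (m2 : V2 -> V2 -> V2)
  (T : tens (findual m1) (findual m2)) : lin (fun u => dpairT T u : k^o).
Proof.
apply: lift_link; split=> [w|v]; apply: lift_lin_param => f g.
  exact: lin_mulc (fd_lin f).
exact: lin_cmul (fd_lin g).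
Qed.

Section Tsubsp.
Variables (V W : lmodType k) (E0 : V -> Prop) (F0 : W -> Prop).

Lemma tsubsp_tmul v w : E0 v \/ F0 w -> tsubsp E0 F0 (tmul v w).
Proof.
move=> h; exists [:: (v, w)]; split; first by rewrite big_seq1.
by move=> p; rewrite inE => /eqP ->.
Qed.

Lemma tsubspD t u : tsubsp E0 F0 t -> tsubsp E0 F0 u -> tsubsp E0 F0 (t + u).
Proof.
move=> [s [-> hs]] [s' [-> hs']]; exists (s ++ s'); split; first by rewrite big_cat.
by move=> p; rewrite mem_cat => /orP [/hs|/hs'].
Qed.

Lemma tsubsp0 : tsubsp E0 F0 0.
Proof. by exists [::]; split; [rewrite big_nil | move=> p]. Qed.

Lemma tsubsp_sum (J : Type) (r : seq J) (P : pred J) (F : J -> tens V W) :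
  (forall j, P j -> tsubsp E0 F0 (F j)) -> tsubsp E0 F0 (\sum_(j <- r | P j) F j).
Proof.
move=> h; elim: r => [|j r IH]; first by rewrite big_nil; apply: tsubsp0.
by rewrite big_cons; case: ifP => // hj; apply: tsubspD => //; apply: h.
Qed.

Lemma tsubsp_lin (U : lmodType k) (F : tens V W -> U) t : lin F ->
  (forall v w, E0 v \/ F0 w -> F (tmul v w) = 0) -> tsubsp E0 F0 t -> F t = 0.
Proof.
move=> hF h [s [-> hs]]; rewrite (lin_sum hF) big_seq big1 // => p /hs; exact: h.
Qed.

Lemma tsubspZ a t : subspace E0 -> subspace F0 ->
  tsubsp E0 F0 t -> tsubsp E0 F0 (a *: t).
Proof.
move=> sE sF [s [-> hs]]; rewrite scaler_sumr big_seq; apply: tsubsp_sum => p hp.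
case: (hs p hp) => h.
  by rewrite -tmulZl; apply: tsubsp_tmul; left; apply: subZ.
by rewrite -tmulZr; apply: tsubsp_tmul; right; apply: subZ.
Qed.

Lemma tsubsp_subspace : subspace E0 -> subspace F0 -> subspace (tsubsp E0 F0).
Proof.
move=> sE sF; split; first exact: tsubsp0.
by move=> a x y hx hy; apply: tsubspD => //; apply: tsubspZ.
Qed.
End Tsubsp.

Lemma tsubsp_mono (V W : lmodType k) (E0 E1 : V -> Prop) (F0 F1 : W -> Prop) t :
  (forall v, E0 v -> E1 v) -> (forall w, F0 w -> F1 w) ->
  tsubsp E0 F0 t -> tsubsp E1 F1 t.
Proof.
move=> h1 h2 [s [-> hs]]; exists s; split=> // p /hs [/h1|/h2]; by [left|right].
Qed.

Lemma tsubsp_tmap (V W V' W' : lmodType k) (f : V -> V') (g : W -> W')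
  (E0 : V -> Prop) (F0 : W -> Prop) (E1 : V' -> Prop) (F1 : W' -> Prop) t :
  lin f -> lin g -> (forall v, E0 v -> E1 (f v)) -> (forall w, F0 w -> F1 (g w)) ->
  tsubsp E0 F0 t -> tsubsp E1 F1 (tmap f g t).
Proof.
move=> hf hg h1 h2 [s [-> hs]].
rewrite (lin_sum (tmap_lin hf hg)) big_seq; apply: tsubsp_sum => p hp.
rewrite tmap_tmul //; apply: tsubsp_tmul.
by case: (hs p hp) => [/h1|/h2]; [left|right].
Qed.

Lemma tsubsp_tmap_r (V W V' W' : lmodType k) (f : V -> V') (g : W -> W')
  (E1 : V' -> Prop) (F1 : W' -> Prop) t :
  (forall w, F1 (g w)) -> tsubsp E1 F1 (tmap f g t).
Proof.
move=> h; rewrite /tmap /lift; apply: tsubsp_sum => p _.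
by apply: tsubsp_tmul; right.
Qed.

Lemma decomp2 (V W : lmodType k) (r r' : nat) (al : 'I_r -> V -> k) (be : 'I_r' -> W -> k)
  (F : V -> k) (G : W -> k) (cF : 'I_r -> k) (cG : 'I_r' -> k) (t : tens V W) :
  (forall v, F v = \sum_l al l v * cF l) -> (forall w, G w = \sum_l be l w * cG l) ->
  lift (fun v w => F v * G w) t =
  \sum_l \sum_l' cF l * cG l' * lift (fun v w => al l v * be l' w) t.
Proof.
move=> hF hG.
rewrite (lift_ext' (b' := fun v w => \sum_l \sum_l' cF l * cG l' * (al l v * be l' w))).
  rewrite lift_sum_b; apply: eq_bigr => l _.
  by rewrite lift_sum_b; apply: eq_bigr => l' _; rewrite lift_mull.
move=> v w; rewrite hF hG mulr_suml; apply: eq_bigr => l _.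
rewrite mulr_sumr; apply: eq_bigr => l' _; ring.
Qed.

Lemma represent (X Y : lmodType k) (mX : X -> X -> X) (mY : Y -> Y -> Y)
  (b : X -> Y -> k^o) I J :
  bilin b -> cof_ideal mX I -> cof_ideal mY J ->
  (forall x y, I x -> b x y = 0) -> (forall x y, J y -> b x y = 0) ->
  exists T : tens (findual mX) (findual mY), forall x y, dpair T x y = b x y.
Proof.
move=> [hb1 hb2] hI hJ v1 v2.
have [r [xs [al [_ hd]]]] := ideal_span hI.
have [r' [ys [be [_ hd']]]] := ideal_span hJ.
exists (\sum_i \sum_j (b (xs i) (ys j) : k) *: tmul (al i) (be j)) => x y.
rewrite (lin_sum (dpair_lin _ _)).
have -> := @vanish_decomp _ I (fun x => b x y) _ xs (fun j v => fdval (al j) v) x (hb1 y)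
  (fun z hz => v1 z y hz) (hd x).
apply: eq_bigr => i _.
have -> := @vanish_decomp _ J (b (xs i)) _ ys (fun j v => fdval (be j) v) y (hb2 _)
  (fun z hz => v2 _ z hz) (hd' y).
rewrite (lin_sum (dpair_lin _ _)) mulr_sumr; apply: eq_bigr => j _.
rewrite (linZ (dpair_lin _ _)) dpair_tmul /GRing.scale /=; ring.
Qed.

Section FDops.
Variables (V : lmodType k) (HV : bialg_ops V) (hV : is_bialgebra HV).
Local Notation m := (bmul HV).
Local Notation d := (bcomul HV).
Local Notation e := (bcounit HV).

Lemma bi_alg : is_algebra m (bone HV). Proof. by case: hV. Qed.
Lemma bi_mlinr x : lin (m x). Proof. by case: bi_alg. Qed.
Lemma bi_mlinl y : lin (fun x => m x y). Proof. by case: bi_alg. Qed.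
Lemma bi_assoc x y z : m x (m y z) = m (m x y) z. Proof. by case: bi_alg. Qed.
Lemma bi_1m x : m (bone HV) x = x. Proof. by case: bi_alg. Qed.
Lemma bi_m1 x : m x (bone HV) = x. Proof. by case: bi_alg. Qed.
Lemma bi_dlin : lin d. Proof. by case: hV => _ [] . Qed.
Lemma bi_elin : lin (e : V -> k^o). Proof. by case: hV => _ [] . Qed.
Lemma bi_dmul x y : d (m x y) = tens_alg_mul m m (d x) (d y).
Proof. by case: hV => _ _ []. Qed.
Lemma bi_emul x y : e (m x y) = e x * e y.
Proof. by case: hV => _ _ []. Qed.

Lemma fd_one_mem : (e : V -> k^o) \in is_findual m.
Proof.
apply: is_fdP; first exact: bi_elin.
exists (fun x => e x = 0); split => //; split.
  split.
    split; first by apply: (linf0 bi_elin).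
    by move=> a x y hx hy; rewrite bi_elin hx hy scaler0 addr0.
  by move=> x y hy; rewrite !bi_emul hy mulr0 mul0r.
exists 1%N, (fun x => \row_(j < 1) e x); split.
  by move=> a x y; apply/rowP => j; rewrite !mxE bi_elin.
move=> x; split; first by move=> h; apply/rowP => j; rewrite !mxE h.
by move/rowP => /(_ ord0); rewrite !mxE.
Qed.
Lemma fd_mul_mem (f g : findual m) :
  (fun x => lift (fun x1 x2 => fdval f x1 * fdval g x2) (d x) : k^o) \in is_findual m.
Proof.
have [I [hI hv]] := fd_common [:: f; g].
have [r [xs [al [hal hd]]]] := ideal_span hI.
have [[sI iI] _] := hI.
pose c i j x := lift (fun x1 x2 => fdval (al i) x1 * fdval (al j) x2) (d x).
have bc i j : bilin (fun x1 x2 => fdval (al i) x1 * fdval (al j) x2 : k^o).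
  exact: bilin_mul (fd_lin _) (fd_lin _).
have lc i j : lin (c i j : V -> k^o) := lin_comp (lift_link (bc i j)) bi_dlin.
have dec (F : V -> k^o) : lin F -> (forall y, I y -> F y = 0) ->
    forall v, F v = \sum_l fdval (al l) v * F (xs l).
  move=> hF hFv v; exact: (@vanish_decomp _ I F _ xs (fun j v => fdval (al j) v) v hF hFv (hd v)).
have conv x : lift (fun x1 x2 => fdval f x1 * fdval g x2) (d x) =
    \sum_l \sum_l' fdval f (xs l) * fdval g (xs l') * c l l' x.
  apply: decomp2 => v; apply: dec; try exact: fd_lin;
    by move=> y hy; apply: (hv _ _ y hy); rewrite !inE eqxx ?orbT.
pose K x := forall i j, c i j x = 0.
have zero x : K x -> forall (cF cG : 'I_r -> k),
    \sum_l \sum_l' cF l * cG l' * c l l' x = 0.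
  move=> hx cF cG; rewrite big1 // => l _; rewrite big1 // => l' _.
  by rewrite hx mulr0.
have cmul x z i j : c i j (m x z) =
    lift (fun a' b' => lift (fun a b => fdval (al i) (m a a') * fdval (al j) (m b b')) (d x)) (d z).
  rewrite /c bi_dmul /tens_alg_mul (lift_compk _ _ (bc i j)) -lift_exch.
  apply: lift_ext' => a b; rewrite (lift_compk _ _ (bc i j)).
  apply: lift_ext' => a' b'; rewrite lift_tmulk //.
have hK : two_sided_ideal m K.
  split.
    split; first by move=> i j; rewrite /c (lin0 bi_dlin); exact: (lin0 (lift_link (bc i j))).
    by move=> a x y hx hy i j; rewrite (lc i j) hx hy scaler0 addr0.
  move=> x y hy; split=> i j.
    rewrite cmul lift_exch; apply: etrans (lift0b _ _) ; apply: lift_ext' => a b.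
    rewrite (decomp2 (al := fun l v => fdval (al l) v) (be := fun l v => fdval (al l) v) (cF := fun l => fdval (al i) (m a (xs l)))
                     (cG := fun l => fdval (al j) (m b (xs l)))).
    + exact: zero.
    + apply: dec; first exact: lin_comp (fd_lin _) (bi_mlinr a).
      by move=> z hz; apply: hal; case: (iI a z hz).
    + apply: dec; first exact: lin_comp (fd_lin _) (bi_mlinr b).
      by move=> z hz; apply: hal; case: (iI b z hz).
  rewrite cmul; apply: etrans (lift0b _ _) ; apply: lift_ext' => a' b'.
  rewrite (decomp2 (al := fun l v => fdval (al l) v) (be := fun l v => fdval (al l) v) (cF := fun l => fdval (al i) (m (xs l) a'))
                   (cG := fun l => fdval (al j) (m (xs l) b'))).
  + exact: zero.
  + apply: dec; first exact: lin_comp (fd_lin _) (bi_mlinl a').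
    by move=> z hz; apply: hal; case: (iI a' z hz).
  + apply: dec; first exact: lin_comp (fd_lin _) (bi_mlinl b').
    by move=> z hz; apply: hal; case: (iI b' z hz).
apply: is_fdP.
  exact: lin_comp (lift_link (bilin_mul (fd_lin f) (fd_lin g))) bi_dlin.
exists K; split; last by move=> x hx; rewrite conv; apply: zero.
split=> //; exists (r * r)%N, (fun x => mxvec (\matrix_(i < r, j < r) c i j x)).
split.
  move=> a x y; rewrite -linearP; congr mxvec; apply/matrixP => i j.
  by rewrite !mxE (lc i j).
move=> x; split.
  by move=> hx; apply/eqP; rewrite mxvec_eq0; apply/eqP/matrixP => i j; rewrite !mxE hx.
move/eqP; rewrite mxvec_eq0 => /eqP /matrixP h i j.
by have := h i j; rewrite !mxE.
Qed.

Lemma FDmul (f g : findual m) x :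
  fdval (bmul (fd_ops HV) f g) x = lift (fun x1 x2 => fdval f x1 * fdval g x2) (d x).
Proof. by rewrite /= insubdK //; apply: fd_mul_mem. Qed.

Lemma FDone x : fdval (bone (fd_ops HV)) x = e x.
Proof. by rewrite /= insubdK //; apply: fd_one_mem. Qed.

Lemma FDcomul (f : findual m) x y :
  dpair (bcomul (fd_ops HV) f) x y = fdval f (m x y).
Proof.
rewrite /=; set P := (fun T => _).
suff : P (xget 0 P) by apply.
apply: xgetPex.
have [J [hJ hv]] := fd_ideal f.
have [[_ iJ] _] := hJ.
apply: (@represent V V m m (fun x y => fdval f (m x y) : k^o) J J).
- split=> [w|v]; [exact: lin_comp (fd_lin f) (bi_mlinl w) | exact: lin_comp (fd_lin f) (bi_mlinr v)].
- exact: hJ.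
- exact: hJ.
- by move=> a b ha; apply: hv; case: (iJ b a ha).
- by move=> a b hb; apply: hv; case: (iJ a b hb).
Qed.

End FDops.

Lemma tens_ind (V W U : lmodType k) (P : U -> Prop) (Phi : tens V W -> U) :
  subspace P -> lin Phi -> (forall v w, P (Phi (tmul v w))) -> forall u, P (Phi u).
Proof.
move=> sP hPhi h u; rewrite (trepE u) /tsumT (lin_sum hPhi).
by apply: sub_sum => // p; apply: h.
Qed.

Lemma subspace_ker (U : lmodType k) (F : U -> k^o) : lin F -> subspace (fun u => F u = 0).
Proof.
move=> hF; split; first exact: lin0 hF.
by move=> a x y hx hy; rewrite hF hx hy scaler0 addr0.
Qed.

Lemma tsubsp_tmap_l (V W V' W' : lmodType k) (f : V -> V') (g : W -> W')
  (E1 : V' -> Prop) (F1 : W' -> Prop) t :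
  (forall v, E1 (f v)) -> tsubsp E1 F1 (tmap f g t).
Proof.
move=> h; rewrite /tmap /lift; apply: tsubsp_sum => p _.
by apply: tsubsp_tmul; left.
Qed.

Lemma fin_codim_fam (V : lmodType k) (I : finType) (l : I -> V -> k^o) :
  (forall i, lin (l i)) -> fin_codim (fun x => forall i, l i x = 0).
Proof.
move=> hl; exists #|I|, (fun x => \row_(j < #|I|) l (enum_val j) x); split.
  by move=> a x y; apply/rowP => j; rewrite !mxE hl.
move=> x; split; first by move=> h; apply/rowP => j; rewrite !mxE h.
move/rowP => h i; have := h (enum_rank i); rewrite !mxE enum_rankK; exact.
Qed.

Lemma tens_decomp (V W : lmodType k) (I : V -> Prop) (J : W -> Prop)
  r r' (xs : 'I_r -> V) (al : 'I_r -> V -> k^o) (ys : 'I_r' -> W) (be : 'I_r' -> W -> k^o) :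
  subspace I -> subspace J -> (forall i, lin (al i)) -> (forall j, lin (be j)) ->
  (forall x, I (x - \sum_i al i x *: xs i)) -> (forall y, J (y - \sum_j be j y *: ys j)) ->
  forall u, tsubsp I J (u - \sum_i \sum_j
     (lift (fun a b => al i a * be j b) u : k) *: tmul (xs i) (ys j)).
Proof.
move=> sI sJ hal hbe hdI hdJ.
have bl i j : bilin (fun a b => al i a * be j b : k^o) := bilin_mul (hal i) (hbe j).
apply: (tens_ind (Phi := fun u => u - \sum_i \sum_j
     (lift (fun a b => al i a * be j b) u : k) *: tmul (xs i) (ys j))).
- exact: tsubsp_subspace.
- have hS : lin (fun u : tens V W => \sum_i \sum_j
     (lift (fun a b => al i a * be j b) u : k) *: tmul (xs i) (ys j)).
    move=> a x y; rewrite scaler_sumr -big_split /=; apply: eq_bigr => i _.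
    rewrite scaler_sumr -big_split /=; apply: eq_bigr => j _.
    by rewrite (lift_link (bl i j)) scalerDl scalerA.
  by move=> a x y; rewrite hS opprD addrACA scalerBr.
- move=> v w.
  have -> : tmul v w - \sum_i \sum_j (lift (fun a b => al i a * be j b) (tmul v w) : k)
      *: tmul (xs i) (ys j) =
      tmul (v - \sum_i (al i v : k) *: xs i) w +
      tmul (\sum_i (al i v : k) *: xs i) (w - \sum_j (be j w : k) *: ys j).
    have [h1 h2] := bilin_tmul V W.
    rewrite (linB (h1 w)) (linB (h2 _)) addrA subrK; congr (_ - _).
    rewrite tmul_suml; apply: eq_bigr => i _.
    rewrite tmulZl tmul_sumr scaler_sumr; apply: eq_bigr => j _.
    by rewrite tmulZr lift_tmulk // scalerA.
  apply: tsubspD; apply: tsubsp_tmul; [left|right]; [exact: hdI | exact: hdJ].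
Qed.

Lemma lin_dsum (U U' : lmodType k) (f : U -> U') r r' (c : 'I_r -> 'I_r' -> k)
  (x : 'I_r -> 'I_r' -> U) : lin f ->
  f (\sum_i \sum_j c i j *: x i j) = \sum_i \sum_j c i j *: f (x i j).
Proof.
move=> hf; rewrite (lin_sum hf); apply: eq_bigr => i _.
rewrite (lin_sum hf); apply: eq_bigr => j _; exact: linZ.
Qed.

Lemma dsum0 (U : lmodType k) r r' (c : 'I_r -> 'I_r' -> k) (x : 'I_r -> 'I_r' -> U) :
  (forall i j, x i j = 0) -> \sum_i \sum_j c i j *: x i j = 0.
Proof. by move=> h; rewrite big1 // => i _; rewrite big1 // => j _; rewrite h scaler0. Qed.

Lemma subspace_fam (V : lmodType k) (I : Type) (l : I -> V -> k^o) :
  (forall i, lin (l i)) -> subspace (fun x => forall i, l i x = 0).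
Proof.
move=> hl; split; first by move=> i; apply: lin0.
by move=> a x y hx hy i; rewrite hl hx hy scaler0 addr0.
Qed.

Lemma cof_open_ideal (V : lmodType k) (m : V -> V -> V) I : cof_ideal m I -> cof_open m I.
Proof. by move=> hI; split; [case: hI => [[]] | exists I]. Qed.

Lemma cont_extract (V W V' W' : lmodType k) (mV : V -> V -> V) (mW : W -> W -> W)
  (mV' : V' -> V' -> V') (mW' : W' -> W' -> W') (f : tens V W -> tens V' W') :
  lcontinuous (tens_open (cof_open mV) (cof_open mW))
              (tens_open (cof_open mV') (cof_open mW')) f ->
  forall I J, cof_ideal mV' I -> cof_ideal mW' J ->
  exists I1 J1, [/\ cof_ideal mV I1, cof_ideal mW J1 &
    forall v w, I1 v \/ J1 w -> tsubsp I J (f (tmul v w))].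
Proof.
move=> hc I J hI hJ.
have op : tens_open (cof_open mV') (cof_open mW') (tsubsp I J).
  split; first by apply: tsubsp_subspace; [case: hI => [[]] | case: hJ => [[]]].
  by exists I, J; split=> //; apply: cof_open_ideal.
have [_ [E0 [F0 [[_ [I1 [hI1 s1]]] [_ [J1 [hJ1 s2]]] h]]]] := hc _ op.
exists I1, J1; split=> // v w hvw; apply: h; apply: tsubsp_tmul.
by case: hvw => [/s1|/s2]; [left|right].
Qed.

Lemma tev_lift (V W : lmodType k) X Y (e1 : V -> X -> k) (e2 : W -> Y -> k)
  (V' W' : lmodType k) (b : V' -> W' -> tens V W) t xy :
  bil_ev e1 -> bil_ev e2 ->
  tev e1 e2 (lift b t) xy = lift (fun v w => tev e1 e2 (b v w) xy) t.
Proof.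
move=> h1 h2; symmetry.
exact: (@lift_lin_fun V' W' (tens V W) b k^o (fun T => tev e1 e2 T xy) t (tev_lin h1 h2 xy)).
Qed.

Lemma dpair_lift (V1 V2 : lmodType k) (m1 : V1 -> V1 -> V1) (m2 : V2 -> V2 -> V2)
  (V' W' : lmodType k) (b : V' -> W' -> tens (findual m1) (findual m2)) t x y :
  dpair (lift b t) x y = lift (fun v w => dpair (b v w) x y) t.
Proof. by rewrite !dpairE tev_lift //; apply: fev_lin. Qed.

Lemma fd_lift (V : lmodType k) (m : V -> V -> V) (F : findual m)
  (V' W' : lmodType k) (b : V' -> W' -> V) t :
  fdval F (lift b t) = lift (fun v w => fdval F (b v w)) t.
Proof.
symmetry; exact: (@lift_lin_fun V' W' V b k^o (fdval F) t (fd_lin F)).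
Qed.

Lemma dpairT_lift (V1 V2 : lmodType k) (m1 : V1 -> V1 -> V1) (m2 : V2 -> V2 -> V2)
  (T : tens (findual m1) (findual m2))
  (V' W' : lmodType k) (b : V' -> W' -> tens V1 V2) t :
  dpairT T (lift b t) = lift (fun v w => dpairT T (b v w)) t.
Proof.
symmetry; exact: (@lift_lin_fun V' W' _ b k^o (fun u => dpairT T u) t (dpairT_lin T)).
Qed.

Lemma sum3 (T1 T2 T3 : Type) (r1 : seq T1) (r2 : seq T2) (r3 : seq T3) (f1 : T1 -> k)
    (g1 : T1 -> T3 -> k) (f2 : T2 -> T3 -> k) (g2 : T2 -> k) :
    \sum_(p <- r1) \sum_(q <- r2) f1 p * g2 q * \sum_(r <- r3) g1 p r * f2 q r =
    \sum_(r <- r3) (\sum_(p <- r1) f1 p * g1 p r) * (\sum_(q <- r2) f2 q r * g2 q).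
Proof.
transitivity (\sum_(p <- r1) \sum_(q <- r2) \sum_(i <- r3) f1 p * g1 p i * (f2 q i * g2 q)).
  apply: eq_bigr => p _; apply: eq_bigr => q _; rewrite mulr_sumr.
  by apply: eq_bigr => i _; ring.
symmetry.
rewrite (eq_bigr (fun i => \sum_(p <- r1) \sum_(q <- r2) f1 p * g1 p i * (f2 q i * g2 q))); last first.
  by move=> i _; rewrite mulr_suml; apply: eq_bigr => p _; rewrite mulr_sumr.
rewrite exchange_big /=; apply: eq_bigr => p _.
by rewrite exchange_big.
Qed.

Lemma lift_swap3 (V1 W1 V2 W2 V3 W3 : lmodType k) (t1 : tens V1 W1) (t2 : tens V2 W2)
  (t3 : tens V3 W3) (F1 : V1 -> k) (G1 : W1 -> V3 -> k) (F2 : V2 -> W3 -> k) (G2 : W2 -> k) :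
  lift (fun v1 w1 => lift (fun v2 w2 => F1 v1 * G2 w2 *
      lift (fun v3 w3 => G1 w1 v3 * F2 v2 w3) t3) t2) t1 =
  lift (fun v3 w3 => lift (fun v1 w1 => F1 v1 * G1 w1 v3) t1 *
      lift (fun v2 w2 => F2 v2 w3 * G2 w2) t2) t3.
Proof.
exact: (@sum3 _ _ _ (trep t1) (trep t2) (trep t3) (fun p => F1 p.1) (fun p r => G1 p.2 r.1)
   (fun q r => F2 q.1 r.2) (fun q => G2 q.2)).
Qed.
Lemma dummy_swap : True.
Proof.
exact I.
Qed.
Lemma dummy_swap2 (x : k) : x = x.
Proof.
by [].
Qed.

Lemma sum5 (T1 T2 T3 T4 T5 : Type) (r1 : seq T1) (r2 : seq T2) (r3 : seq T3)
  (r4 : seq T4) (r5 : T3 -> T4 -> seq T5) (F1 : T1 -> T3 -> k) (G1 : T1 -> T5 -> k)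
  (F2 : T2 -> T5 -> k) (G2 : T2 -> T4 -> k) :
  \sum_(s <- r1) \sum_(s' <- r2) \sum_(p <- r3) \sum_(q <- r4)
     F1 s p * G2 s' q * \sum_(r <- r5 p q) G1 s r * F2 s' r =
  \sum_(p <- r3) \sum_(q <- r4) \sum_(r <- r5 p q)
     (\sum_(s <- r1) F1 s p * G1 s r) * (\sum_(s' <- r2) F2 s' r * G2 s' q).
Proof.
transitivity (\sum_(p <- r3) \sum_(q <- r4) \sum_(r <- r5 p q) \sum_(s <- r1) \sum_(s' <- r2)
     F1 s p * G1 s r * (F2 s' r * G2 s' q)); last first.
  apply: eq_bigr => p _; apply: eq_bigr => q _; apply: eq_bigr => r _.
  rewrite mulr_suml; apply: eq_bigr => s _; by rewrite mulr_sumr.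
transitivity (\sum_(s <- r1) \sum_(s' <- r2) \sum_(p <- r3) \sum_(q <- r4) \sum_(r <- r5 p q)
     F1 s p * G1 s r * (F2 s' r * G2 s' q)).
  apply: eq_bigr => s _; apply: eq_bigr => s' _; apply: eq_bigr => p _; apply: eq_bigr => q _.
  by rewrite mulr_sumr; apply: eq_bigr => r _; ring.
transitivity (\sum_(s <- r1) \sum_(p <- r3) \sum_(q <- r4) \sum_(r <- r5 p q) \sum_(s' <- r2)
     F1 s p * G1 s r * (F2 s' r * G2 s' q)).
  apply: eq_bigr => s _; rewrite exchange_big /=; apply: eq_bigr => p _.
  rewrite exchange_big /=; apply: eq_bigr => q _.
  by rewrite exchange_big.
rewrite exchange_big /=; apply: eq_bigr => p _.
rewrite exchange_big /=; apply: eq_bigr => q _.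
by rewrite exchange_big.
Qed.

Lemma lift_swap5 (V1 W1 V2 W2 V3 W3 V4 W4 V5 W5 : lmodType k) (t1 : tens V1 W1)
  (t2 : tens V2 W2) (t3 : tens V3 W3) (t4 : tens V4 W4) (t5 : W3 -> V4 -> tens V5 W5)
  (f1 : V1 -> V3 -> k) (g1 : W1 -> V5 -> k) (f2 : V2 -> W5 -> k) (g2 : W2 -> W4 -> k) :
  lift (fun v1 w1 => lift (fun v2 w2 => lift (fun v3 w3 => lift (fun v4 w4 =>
     f1 v1 v3 * g2 w2 w4 * lift (fun v5 w5 => g1 w1 v5 * f2 v2 w5) (t5 w3 v4)) t4) t3) t2) t1
  = lift (fun v3 w3 => lift (fun v4 w4 => lift (fun v5 w5 =>
     lift (fun v1 w1 => f1 v1 v3 * g1 w1 v5) t1 * lift (fun v2 w2 => f2 v2 w5 * g2 w2 w4) t2)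
     (t5 w3 v4)) t4) t3.
Proof.
exact: (@sum5 _ _ _ _ _ (trep t1) (trep t2) (trep t3) (trep t4) (fun p q => trep (t5 p.2 q.1))
  (fun s p => f1 s.1 p.1) (fun s r => g1 s.2 r.1) (fun s' r => f2 s'.1 r.2) (fun s' q => g2 s'.2 q.2)).
Qed.

Section Main.
Variables (A B : lmodType k) (HA : bialg_ops A) (HB : bialg_ops B)
  (tau : tens B A -> tens A B) (phi : tens A B -> tens B A).
Hypotheses (hA : is_bialgebra HA) (hB : is_bialgebra HB)
  (htw : is_twisting (bmul HA) (bone HA) (bmul HB) (bone HB) tau)
  (hctw : is_cotwisting (bcomul HA) (bcounit HA) (bcomul HB) (bcounit HB) phi)
  (hH : is_bialgebra (bitwisted HA HB tau phi)).
Local Notation mA := (bmul HA).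
Local Notation mB := (bmul HB).
Local Notation uA := (bone HA).
Local Notation uB := (bone HB).
Local Notation dA := (bcomul HA).
Local Notation dB := (bcomul HB).
Local Notation eA := (bcounit HA).
Local Notation eB := (bcounit HB).
Local Notation H := (bitwisted HA HB tau phi).
Local Notation mR := (bmul H).

Lemma ltau : lin tau. Proof. by case: htw. Qed.
Lemma lphi : lin phi. Proof. by case: hctw. Qed.

Definition G a (b : B) a' (b' : B) : tens A B :=
  tmap (mA a) (fun y => mB y b') (tau (tmul b a')).

Lemma G_a b a' b' : lin (fun a => G a b a' b').
Proof.
rewrite /G /tmap; apply: lift_lin_param => v w.
exact: lin_comp (proj1 (bilin_tmul _ _) _) (bi_mlinl hA v).
Qed.
Lemma G_b a a' b' : lin (fun b => G a b a' b').
Proof.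
exact: lin_comp (tmap_lin (bi_mlinr hA a) (bi_mlinl hB b'))
  (lin_comp ltau (proj1 (bilin_tmul _ _) a')).
Qed.
Lemma G_a' a b b' : lin (fun a' => G a b a' b').
Proof.
exact: lin_comp (tmap_lin (bi_mlinr hA a) (bi_mlinl hB b'))
  (lin_comp ltau (proj2 (bilin_tmul _ _) b)).
Qed.
Lemma G_b' a b a' : lin (fun b' => G a b a' b').
Proof.
rewrite /G /tmap; apply: lift_lin_param => v w.
exact: lin_comp (proj2 (bilin_tmul _ _) _) (bi_mlinr hB w).
Qed.

Lemma mR_tmul a b a' b' :
  mR (tmul a b) (tmul a' b') = tmap (mA a) (fun y => mB y b') (tau (tmul b a')).
Proof.
rewrite /= /twisted_mul -/(G a b a' b').
rewrite (@lift_tmul _ _ _ (fun a b => lift (fun a' b' => G a b a' b') (tmul a' b'))).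
- by rewrite lift_tmul //; [split=> [w|v]; [apply: G_a' | apply: G_b'] | apply: sep_tens].
- by split=> [w|v]; apply: lift_lin_param => a0 b0; [apply: G_a | apply: G_b].
- exact: sep_tens.
Qed.

Lemma tmapAB_id t : tmap (mA uA) (fun y => mB y uB) t = t.
Proof. by apply: tmap_id => v; [apply: (bi_1m hA) | apply: (bi_m1 hB)]. Qed.

Lemma tau1l a : tau (tmul uB a) = tmul a uB.
Proof.
have := bi_1m hH (tmul a uB); rewrite [bone _]/= mR_tmul tmapAB_id; exact.
Qed.
Lemma tau1r b : tau (tmul b uA) = tmul uA b.
Proof.
have := bi_m1 hH (tmul uA b); rewrite [bone _]/= mR_tmul tmapAB_id; exact.
Qed.

Lemma tmul_split a b : tmul a b = mR (tmul a uB) (tmul uA b).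
Proof.
rewrite mR_tmul tau1l tmap_tmul ?(bi_m1 hA) ?(bi_1m hB) //.
  exact: bi_mlinr hA a.
exact: bi_mlinl hB b.
Qed.

Lemma mulA1 x a : mR (tmul x uB) (tmul a uB) = tmul (mA x a) uB.
Proof.
rewrite mR_tmul tau1l tmap_tmul ?(bi_m1 hB) //.
  exact: bi_mlinr hA x.
exact: bi_mlinl hB uB.
Qed.
Lemma mul1B y b : mR (tmul uA y) (tmul uA b) = tmul uA (mB y b).
Proof.
rewrite mR_tmul tau1r tmap_tmul ?(bi_m1 hA) //.
  exact: bi_mlinr hA uA.
exact: bi_mlinl hB b.
Qed.

Lemma Hdual_van (F : findual mR) : exists I J,
  [/\ cof_ideal mA I, cof_ideal mB J & forall a b, I a \/ J b -> fdval F (tmul a b) = 0].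
Proof.
have [K [[[sK iK] [n [pi [lpi hpi]]]] hv]] := fd_ideal F.
have [t1 t2] := bilin_tmul A B.
exists (fun a => K (tmul a uB)), (fun b => K (tmul uA b)); split.
- split; last first.
    exists n, (fun a => pi (tmul a uB)); split; first exact: lin_comp lpi (t1 uB).
    by move=> x; apply: hpi.
  split.
    split; first by rewrite (lin0 (t1 uB)); apply: sub0.
    by move=> a x y hx hy; rewrite (t1 uB); apply: (proj2 sK).
  move=> x y hy; rewrite -!mulA1; exact: iK.
- split; last first.
    exists n, (fun b => pi (tmul uA b)); split; first exact: lin_comp lpi (t2 uA).
    by move=> x; apply: hpi.
  split.
    split; first by rewrite (lin0 (t2 uA)); apply: sub0.
    by move=> a x y hx hy; rewrite (t2 uA); apply: (proj2 sK).
  move=> x y hy; rewrite -!mul1B; exact: iK.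
- move=> a b h; apply: hv; rewrite tmul_split.
  by case: h => h; [case: (iK (tmul uA b) _ h) | case: (iK (tmul a uB) _ h)].
Qed.

Hypothesis hct : lcontinuous (tens_open (cof_open (bmul HB)) (cof_open (bmul HA)))
              (tens_open (cof_open (bmul HA)) (cof_open (bmul HB))) tau.

Lemma Hdual_mem (F : tens A B -> k^o) I J : lin F -> cof_ideal mA I -> cof_ideal mB J ->
  (forall a b, I a \/ J b -> F (tmul a b) = 0) -> F \in is_findual mR.
Proof.
move=> lF hI hJ hF.
have [JB [IA [hJB hIA hc]]] := cont_extract hct hI hJ.
have [[sI iI] _] := hI; have [[sJ iJ] _] := hJ.
have vanF u : tsubsp I J u -> F u = 0 by apply: tsubsp_lin.
have sk : subspace (fun z : k^o => z = 0) := subspace_ker (@lin_id k^o).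
have labs u w : tsubsp (fun a => I a /\ IA a) J w -> F (mR u w) = 0.
  apply: (tsubsp_lin (F := fun w => F (mR u w))); first exact: lin_comp lF (bi_mlinr hH u).
  move=> a b hab.
  apply: (tens_ind (P := fun z : k^o => z = 0) (Phi := fun u => F (mR u (tmul a b)))) => //.
    exact: lin_comp lF (bi_mlinl hH (tmul a b)).
  move=> x y; cbv beta; rewrite mR_tmul; apply: vanF.
  case: hab => [[ha ha1]|hb].
    apply: (tsubsp_tmap (E0 := I) (F0 := J)).
    - exact: bi_mlinr hA x.
    - exact: bi_mlinl hB b.
    - by move=> v hv; case: (iI x v hv).
    - by move=> w0 hw; case: (iJ b w0 hw).
    - by apply: hc; right.
  by apply: tsubsp_tmap_r => w0; case: (iJ w0 b hb).
have rabs w u : tsubsp I (fun b => J b /\ JB b) w -> F (mR w u) = 0.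
  apply: (tsubsp_lin (F := fun w => F (mR w u))); first exact: lin_comp lF (bi_mlinl hH u).
  move=> a b hab.
  apply: (tens_ind (P := fun z : k^o => z = 0) (Phi := fun u => F (mR (tmul a b) u))) => //.
    exact: lin_comp lF (bi_mlinr hH (tmul a b)).
  move=> x y; cbv beta; rewrite mR_tmul; apply: vanF.
  case: hab => [ha|[hb hb1]].
    by apply: tsubsp_tmap_l => v; case: (iI v a ha).
  apply: (tsubsp_tmap (E0 := I) (F0 := J)).
  - exact: bi_mlinr hA a.
  - exact: bi_mlinl hB y.
  - by move=> v hv; case: (iI a v hv).
  - by move=> w0 hw; case: (iJ y w0 hw).
  - by apply: hc; left.
have hI2 := cof_inter hI hIA; have hJ2 := cof_inter hJ hJB.
have [r1 [xs1 [al1 [_ hd1]]]] := ideal_span hI2.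
have [r1' [ys1 [be1 [_ hd1']]]] := ideal_span hJ.
have [r2 [xs2 [al2 [_ hd2]]]] := ideal_span hI.
have [r2' [ys2 [be2 [_ hd2']]]] := ideal_span hJ2.
have dec1 := tens_decomp (al := fun i x => fdval (al1 i) x) (be := fun i x => fdval (be1 i) x)
  (proj1 (proj1 hI2)) sJ (fun i => fd_lin _) (fun i => fd_lin _) hd1 hd1'.
have dec2 := tens_decomp (al := fun i x => fdval (al2 i) x) (be := fun i x => fdval (be2 i) x)
  sI (proj1 (proj1 hJ2)) (fun i => fd_lin _) (fun i => fd_lin _) hd2 hd2'.
pose z1 (q : 'I_r1 * 'I_r1') := tmul (xs1 q.1) (ys1 q.2).
pose z2 (q : 'I_r2 * 'I_r2') := tmul (xs2 q.1) (ys2 q.2).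
pose K z := forall q : ('I_r2 * 'I_r2') * ('I_r1 * 'I_r1'), F (mR (mR (z2 q.1) z) (z1 q.2)) = 0.
have claim z : K z -> forall u v, F (mR (mR u z) v) = 0.
  move=> hz u v.
  rewrite -(subrK (\sum_i \sum_j (lift (fun a b => fdval (al1 i) a * fdval (be1 j) b) v : k)
     *: tmul (xs1 i) (ys1 j)) v).
  rewrite (linD (bi_mlinr hH _)) (linD lF) labs // add0r.
  rewrite (lin_dsum _ _ (bi_mlinr hH _)) (lin_dsum _ _ lF); apply: dsum0 => i j.
  rewrite -(subrK (\sum_i \sum_j (lift (fun a b => fdval (al2 i) a * fdval (be2 j) b) u : k)
     *: tmul (xs2 i) (ys2 j)) u).
  rewrite (linD (bi_mlinl hH _)) (linD (bi_mlinl hH _)) (linD lF).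
  rewrite -bi_assoc // rabs // add0r.
  rewrite (lin_dsum _ _ (bi_mlinl hH _)) (lin_dsum _ _ (bi_mlinl hH _)) (lin_dsum _ _ lF).
  by apply: dsum0 => i' j'; apply: (hz ((i', j'), (i, j))).
have lK q : lin (fun z => F (mR (mR (z2 q.1) z) (z1 q.2)) : k^o).
  exact: lin_comp lF (lin_comp (bi_mlinl hH (z1 q.2)) (bi_mlinr hH (z2 q.1))).
apply: is_fdP => //.
exists K; split; last first.
  move=> z hz; have := claim z hz (bone H) (bone H).
  by rewrite (bi_1m hH) (bi_m1 hH).
split; last exact: fin_codim_fam lK.
split; first exact: subspace_fam lK.
move=> x y hy; split => q.
  by rewrite (bi_assoc hH); apply: claim.
by rewrite (bi_assoc hH) -(bi_assoc hH); apply: claim.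
Qed.

Definition PsiS (F : findual mR) (T : tens (findual mA) (findual mB)) :=
  forall a b, dpair T a b = fdval F (tmul a b).
Definition Psi (F : findual mR) : tens (findual mA) (findual mB) := xget 0 (PsiS F).

Lemma PsiP F a b : dpair (Psi F) a b = fdval F (tmul a b).
Proof.
suff : PsiS F (Psi F) by apply.
apply: xgetPex.
have [I [J [hI hJ hv]]] := Hdual_van F.
have [t1 t2] := bilin_tmul A B.
apply: (@represent A B mA mB (fun a b => fdval F (tmul a b) : k^o) I J).
- split=> [w|v]; [exact: lin_comp (fd_lin F) (t1 w) | exact: lin_comp (fd_lin F) (t2 v)].
- exact: hI.
- exact: hJ.
- by move=> x y hx; apply: hv; left.
- by move=> x y hy; apply: hv; right.
Qed.

Lemma T_van (T : tens (findual mA) (findual mB)) : exists I J,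
  [/\ cof_ideal mA I, cof_ideal mB J & forall a b, I a \/ J b -> dpair T a b = 0].
Proof.
have [I [hI hvI]] := fd_common [seq p.1 | p <- trep T].
have [J [hJ hvJ]] := fd_common [seq p.2 | p <- trep T].
exists I, J; split=> // a b hab; rewrite /dpair /lift big_seq big1 // => p hp.
case: hab => [ha|hb].
  by rewrite (hvI p.1) ?mul0r //; apply: map_f.
by rewrite (hvJ p.2) ?mulr0 //; apply: map_f.
Qed.

Lemma T_mem (T : tens (findual mA) (findual mB)) :
  (fun u => dpairT T u : k^o) \in is_findual mR.
Proof.
have [I [J [hI hJ hv]]] := T_van T.
apply: (Hdual_mem (I := I) (J := J)) => //; first exact: dpairT_lin.
by move=> a b hab; rewrite dpairT_tmul; apply: hv.
Qed.

Definition fromT (T : tens (findual mA) (findual mB)) : findual mR := FinDual (T_mem T).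

Lemma Psi_lin : lin Psi.
Proof.
move=> c F G; apply: dpair_inj => a b.
by rewrite (dpair_lin a b) !PsiP fdvalD fdvalZ.
Qed.

Lemma Psi_inj F G : Psi F = Psi G -> F = G.
Proof.
move=> e; apply: fdE => u.
apply/eqP; rewrite -subr_eq0; apply/eqP.
apply: (tens_ind (P := fun z : k^o => z = 0) (Phi := fun u => fdval F u - fdval G u : k^o)).
- exact: subspace_ker (@lin_id k^o).
- move=> a x y; rewrite !(fd_lin F) !(fd_lin G) /GRing.scale /=; ring.
- by move=> v w; rewrite -!PsiP e subrr.
Qed.

Lemma Psi_fromT T : Psi (fromT T) = T.
Proof. by apply: dpair_inj => a b; rewrite PsiP /= dpairT_tmul. Qed.

Lemma Psi_bij : bijective Psi.
Proof.
exists fromT => [F|T]; last exact: Psi_fromT.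
by apply: Psi_inj; rewrite Psi_fromT.
Qed.

Hypothesis hcp : lcontinuous (tens_open (cof_open (bmul HA)) (cof_open (bmul HB)))
              (tens_open (cof_open (bmul HB)) (cof_open (bmul HA))) phi.

Lemma T_van_gen (V1 V2 : lmodType k) (m1 : V1 -> V1 -> V1) (m2 : V2 -> V2 -> V2)
  (T : tens (findual m1) (findual m2)) : exists I J,
  [/\ cof_ideal m1 I, cof_ideal m2 J & forall a b, I a \/ J b -> dpair T a b = 0].
Proof.
have [I [hI hvI]] := fd_common [seq p.1 | p <- trep T].
have [J [hJ hvJ]] := fd_common [seq p.2 | p <- trep T].
exists I, J; split=> // a b hab; rewrite /dpair /lift big_seq big1 // => p hp.
case: hab => [ha|hb].
  by rewrite (hvI p.1) ?mul0r //; apply: map_f.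
by rewrite (hvJ p.2) ?mulr0 //; apply: map_f.
Qed.

Lemma dual_twist_spec (V W : lmodType k) (mV : V -> V -> V) (mW : W -> W -> W)
  (f : tens W V -> tens V W) :
  lin f ->
  lcontinuous (tens_open (cof_open mW) (cof_open mV))
              (tens_open (cof_open mV) (cof_open mW)) f ->
  forall (T : tens (findual mV) (findual mW)) b a,
  dpair (dual_twist f T) b a = dpairT T (f (tmul b a)).
Proof.
move=> lf hc T b a; rewrite /dual_twist; set P := (fun S => _).
suff : P (xget 0 P) by apply.
apply: xgetPex.
have [I [J [hI hJ hv]]] := T_van_gen T.
have [I1 [J1 [hI1 hJ1 hc1]]] := cont_extract hc hI hJ.
have [t1 t2] := bilin_tmul W V.
have vT u : tsubsp I J u -> dpairT T u = 0.
  apply: (tsubsp_lin (F := fun u => dpairT T u : k^o)); first exact: dpairT_lin.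
  by move=> x y hxy; rewrite dpairT_tmul; apply: hv.
apply: (@represent W V mW mV (fun b a => dpairT T (f (tmul b a)) : k^o) I1 J1) => //.
- split=> [w|v].
    exact: lin_comp (dpairT_lin T) (lin_comp lf (t1 w)).
  exact: lin_comp (dpairT_lin T) (lin_comp lf (t2 v)).
- by move=> x y hx; apply: vT; apply: hc1; left.
- by move=> x y hy; apply: vT; apply: hc1; right.
Qed.

Local Notation D := (dual_bitwisted HA HB tau phi).

Lemma DTphi (T : tens (findual mB) (findual mA)) a b :
  dpair (dual_twist phi T) a b = dpairT T (phi (tmul a b)).
Proof. exact: dual_twist_spec lphi hcp T a b. Qed.
Lemma DTtau (T : tens (findual mA) (findual mB)) b a :
  dpair (dual_twist tau T) b a = dpairT T (tau (tmul b a)).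
Proof. exact: dual_twist_spec ltau hct T b a. Qed.

Lemma Psi_one : Psi (bone (fd_ops H)) = bone D.
Proof.
apply: dpair_inj => a b; rewrite PsiP (FDone hH) /= dpair_tmul !FDone //.
by rewrite /tcounit lift_tmulk //; apply: bilin_mul; apply: bi_elin.
Qed.

Lemma Psi_counit F : bcounit D (Psi F) = bcounit (fd_ops H) F.
Proof. by rewrite /= /tcounit -PsiP. Qed.

Lemma Psi_comul F : tmap Psi Psi (bcomul (fd_ops H) F) = bcomul D (Psi F).
Proof.
pose ev := tev (@fev A mA) (@fev B mB).
have hev : bil_ev ev := tev_lin (@fev_lin _ _) (@fev_lin _ _).
apply: (LF_inj (ev := tev ev ev)).
  by apply: LF_tens; apply: LF_tens; exact: LF_fd.
case=> [[a b] [a' b']].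
rewrite /tmap tev_lift //.
rewrite (lift_ext' (b' := fun S S' => fdval S (tmul a b) * fdval S' (tmul a' b'))); last first.
  by move=> S S'; rewrite tev_tmul //= /ev -!dpairE !PsiP.
have -> : lift (fun S S' : findual mR => fdval S (tmul a b) * fdval S' (tmul a' b'))
   (bcomul (fd_ops H) F) = dpair (bcomul (fd_ops H) F) (tmul a b) (tmul a' b') by [].
rewrite (FDcomul hH) mR_tmul /tmap fd_lift.
have -> : bcomul D (Psi F) = cotwisted_comul (bcomul (fd_ops HA)) (bcomul (fd_ops HB))
   (dual_twist tau) (Psi F) by [].
have inner (f : findual mA) (g : findual mB) :
  tev ev ev (lift (fun a1 a2 => lift (fun b1 b2 => lift (fun y x => tmul (tmul a1 y) (tmul x b2))
     (dual_twist tau (tmul a2 b1))) (bcomul (fd_ops HB) g)) (bcomul (fd_ops HA) f)) (a, b, (a', b'))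
  = lift (fun x y => fdval f (mA a x) * fdval g (mB y b')) (tau (tmul b a')).
  rewrite tev_lift //.
  under lift_ext' => a1 a2.
    rewrite tev_lift //.
    under lift_ext' => b1 b2.
      rewrite tev_lift //.
      under lift_ext' => y x do rewrite tev_tmul //= /ev !tev_tmul //= /fev.
      rewrite (lift_ext' (b' := fun y x => fdval a1 a * fdval b2 b' * (fdval y b * fdval x a'))); last first.
        by move=> y x; ring.
      rewrite lift_mull.
      have -> : lift (fun (y : findual mB) (x : findual mA) => fdval y b * fdval x a')
         (dual_twist tau (tmul a2 b1)) = dpair (dual_twist tau (tmul a2 b1)) b a' by [].
      rewrite DTtau /dpairT.
      under lift_ext' => x y do rewrite dpair_tmul.
      over.
    over.
  under [RHS]lift_ext' => x y do rewrite -(FDcomul hA) -(FDcomul hB).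
  exact: lift_swap3.
rewrite /cotwisted_comul tev_lift //.
rewrite (lift_ext' (b' := fun (f : findual mA) (g : findual mB) =>
   lift (fun x y => fdval f (mA a x) * fdval g (mB y b')) (tau (tmul b a')))); last first.
  by move=> f g; apply: inner.
rewrite lift_exch; apply: lift_ext' => x y.
by rewrite -PsiP.
Qed.

Definition Q3 a1 a2 b1 b2 : tens (tens A B) (tens A B) :=
  lift (fun (y : B) (x : A) => tmul (tmul a1 y) (tmul x b2)) (phi (tmul a2 b1)).
Definition Q2 a1 a2 b := lift (Q3 a1 a2) (dB b).

Lemma bQ (a1 : A) (b2 : B) : bilin (fun (y : B) (x : A) => tmul (tmul a1 y) (tmul x b2)).
Proof.
have [t1 t2] := bilin_tmul A B; have [t1' t2'] := bilin_tmul (tens A B) (tens A B).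
split=> [x|y]; [exact: lin_comp (t1' _) (t2 a1) | exact: lin_comp (t2' _) (t1 b2)].
Qed.

Lemma cot_tmul a b : bcomul H (tmul a b) = lift (fun a1 a2 => Q2 a1 a2 b) (dA a).
Proof.
have [t1 t2] := bilin_tmul A B; have [t1' t2'] := bilin_tmul (tens A B) (tens A B).
have sT := @sep_tens (tens A B) (tens A B).
have Q3a1 a2 b1 b2 : lin (fun a1 => Q3 a1 a2 b1 b2).
  rewrite /Q3; apply: lift_lin_param => y x; exact: lin_comp (t1' _) (t1 y).
have Q3b2 a1 a2 b1 : lin (fun b2 => Q3 a1 a2 b1 b2).
  rewrite /Q3; apply: lift_lin_param => y x; exact: lin_comp (t2' _) (t2 x).
have Q3a2 a1 b1 b2 : lin (fun a2 => Q3 a1 a2 b1 b2).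
  exact: lin_comp (lift_lin (bQ a1 b2) sT) (lin_comp lphi (t1 b1)).
have Q3b1 a1 a2 b2 : lin (fun b1 => Q3 a1 a2 b1 b2).
  exact: lin_comp (lift_lin (bQ a1 b2) sT) (lin_comp lphi (t2 a2)).
have Q2b a1 a2 : lin (Q2 a1 a2).
  exact: lin_comp (lift_lin (conj (Q3b1 a1 a2) (Q3b2 a1 a2)) sT) (bi_dlin hB).
have Q2bil b0 : bilin (fun a1 a2 => Q2 a1 a2 b0).
  split=> [a2|a1]; rewrite /Q2; apply: lift_lin_param => b1 b2; [exact: Q3a1 | exact: Q3a2].
rewrite /= /cotwisted_comul -/(Q3 _ _ _ _) -/(Q2 _ _ _).
apply: (lift_tmul (b := fun a0 b0 => lift (fun a1 a2 => Q2 a1 a2 b0) (dA a0))) => //.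
split=> [b0|a0].
  exact: lin_comp (lift_lin (Q2bil b0) sT) (bi_dlin hA).
by apply: lift_lin_param => a1 a2; apply: Q2b.
Qed.

Lemma Psi_mul F G : Psi (bmul (fd_ops H) F G) = bmul D (Psi F) (Psi G).
Proof.
apply: dpair_inj => a b.
rewrite PsiP (FDmul hH) cot_tmul.
have bF : bilin (fun x1 x2 : tens A B => fdval F x1 * fdval G x2 : k^o).
  exact: bilin_mul (fd_lin F) (fd_lin G).
rewrite lift_compk //.
rewrite (lift_ext' (b' := fun a1 a2 => lift (fun b1 b2 => lift (fun y x =>
   lift (fun (f : findual mA) (g : findual mB) => fdval f a1 * fdval g y) (Psi F) *
   lift (fun (f' : findual mA) (g' : findual mB) => fdval f' x * fdval g' b2) (Psi G))
   (phi (tmul a2 b1))) (dB b))); last first.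
  move=> a1 a2; rewrite /Q2 lift_compk //; apply: lift_ext' => b1 b2.
  rewrite /Q3 lift_compk //; apply: lift_ext' => y x.
  by rewrite lift_tmulk // -!PsiP.
have -> : bmul D (Psi F) (Psi G) = twisted_mul (bmul (fd_ops HA)) (bmul (fd_ops HB))
   (dual_twist phi) (Psi F) (Psi G) by [].
have inner (f : findual mA) (g : findual mB) (f' : findual mA) (g' : findual mB) :
  dpair (tmap (bmul (fd_ops HA) f) (fun y => bmul (fd_ops HB) y g') (dual_twist phi (tmul g f'))) a b
  = lift (fun a1 a2 => lift (fun b1 b2 => fdval f a1 * fdval g' b2 *
       lift (fun y x => fdval g y * fdval f' x) (phi (tmul a2 b1))) (dB b)) (dA a).
  transitivity (lift (fun u v => lift (fun a1 a2 => fdval f a1 * fdval u a2) (dA a) *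
     lift (fun b1 b2 => fdval v b1 * fdval g' b2) (dB b)) (dual_twist phi (tmul g f'))).
    by rewrite /tmap dpair_lift; apply: lift_ext' => u v; rewrite dpair_tmul !FDmul.
  transitivity (lift (fun a1 a2 => lift (fun b1 b2 => fdval f a1 * fdval g' b2 *
       dpair (dual_twist phi (tmul g f')) a2 b1) (dB b)) (dA a)).
    by symmetry; exact: lift_swap3.
  apply: lift_ext' => a1 a2; apply: lift_ext' => b1 b2.
  rewrite DTphi /dpairT; congr (_ * _); apply: lift_ext' => y x.
  by rewrite dpair_tmul.
rewrite /twisted_mul dpair_lift.
rewrite (lift_ext' (b' := fun f g => lift (fun f' g' => lift (fun a1 a2 => lift (fun b1 b2 =>
   fdval f a1 * fdval g' b2 * lift (fun y x => fdval g y * fdval f' x) (phi (tmul a2 b1)))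
   (dB b)) (dA a)) (Psi G))); last first.
  by move=> f g; rewrite dpair_lift; apply: lift_ext' => f' g'; apply: inner.
symmetry; exact: lift_swap5.
Qed.

End Main.

End S.

Local Close Scope ring_scope.
Unset Implicit Arguments.

Theorem corollary4p6 (k : fieldType) (A B : lmodType k)
    (HA : bialg_ops A) (HB : bialg_ops B)
    (tau : tens B A -> tens A B) (phi : tens A B -> tens B A) :
  is_bialgebra HA ->
  is_bialgebra HB ->
  is_twisting (bmul HA) (bone HA) (bmul HB) (bone HB) tau ->
  is_cotwisting (bcomul HA) (bcounit HA) (bcomul HB) (bcounit HB) phi ->
  is_bialgebra (bitwisted HA HB tau phi) ->
  lcontinuous (tens_open (cof_open (bmul HB)) (cof_open (bmul HA)))
              (tens_open (cof_open (bmul HA)) (cof_open (bmul HB))) tau ->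
  lcontinuous (tens_open (cof_open (bmul HA)) (cof_open (bmul HB)))
              (tens_open (cof_open (bmul HB)) (cof_open (bmul HA))) phi ->
  exists Psi, bialg_iso (fd_ops (bitwisted HA HB tau phi))
                        (dual_bitwisted HA HB tau phi) Psi.
Proof.
move=> hA hB htw hctw hH hct hcp.
exists (@Psi k A B HA HB tau phi); split.
- by apply: Psi_lin.
- by apply: Psi_bij.
- split.
  + by move=> x y; apply: Psi_mul.
  + by apply: Psi_one.
  + by move=> x; apply: Psi_comul.
  + by move=> x; apply: Psi_counit.
Qed.
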